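(* Nominal equivalence $\equiv_\star$ is an equivalence relation. When restricted to state terms of $\mathcal{R}^{\mathrm{dml}}_{\Sigma,\mathcal{D}}(Q)$ satisfying the freshness condition, it is a bisimulation on $\mathcal{R}^{\mathrm{dml}}_{\Sigma,\mathcal{D}}(Q)$, for every DML query $Q$: if $t_1\equiv_\star t_2$ and $t_1\to t_1'$ then $t_2\to t_2'$ for some $t_2'\equiv_\star t_1'$, and symmetrically.
   Context: Setting. Order-sorted signature $\Sigma$ with sorts $\mathsf{Fact}$, $\mathsf{Bool}$ interpreted in an algebra $\mathcal{D}$ presented by structural axioms $A$ and confluent terminating equations with Boolean connectives and Boolean-valued equality; ground $\mathsf{Bool}$ terms reduce to $\mathsf{true}$/$\mathsf{false}$. Multisets of facts: associative commutative $\circ$ with identity $\emptyset$. Nominal sorts $s$ (values carry no algebraic or relational structure besides equality) have values $\iota^s_n$ ($n\in\mathbb{N}$); for each nominal sort a fresh-fact constructor $C_s$, and $\upsilon(C_{s_1}(\iota^{s_1}_{m_1})\circ\cdots\circ C_{s_n}(\iota^{s_n}_{m_n}))=C_{s_1}(\iota^{s_1}_{m_1+1})\circ\cdots\circ C_{s_n}(\iota^{s_n}_{m_n+1})$. Patterns: $\circ$-combinations of $[F]_!$, $[F]_?$, $[F]_0$ (multisets of possibly non-ground facts) and $[G]_\star$ (fresh facts); $P_!,P_?,P_0,P_\star$ the wrapped multisets. Terminating: $P_?\neq\emptyset$; semi-terminating: $P_?\circ P_0\neq\emptyset$; terminating and preserving: $P_?\neq\emptyset$, $P_0=P_\star=\emptyset$.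 Conditions: $\mathrm{False}$, $\{B\}$, $\neg\psi$, $\psi_1\vee\psi_2$, $\exists P.\psi$ ($P$ terminating and preserving). DML queries: $\emptyset$, $\mathrm{ok}$, facts, $D\oplus D'$, $\varphi\Rightarrow D$, $\mathrm{From}\,P.D$ ($P$ terminating, or $P$ semi-terminating with $D$ success assured: $\mathrm{ok}$, a fact, or $D_1\oplus D_2$ with one side success assured). Condition rules (''$X\mapsto Y$'' meaning $\{F,S\,X\}^c\to\{F,S\,Y\}^c$, $\sigma=\{\vec a/\vec v\}$): $[\vec a]_{\mathrm{False}}\mapsto\mathrm{Res}(\mathsf{false})$; $[\vec a]_{\{B\}}\mapsto\mathrm{Res}(\sigma(B))$; $[\vec a]_{\neg\psi}\mapsto\mathrm{Not}[\vec a]_\psi$; $\mathrm{Not}\,\mathrm{Res}(B)\mapsto\mathrm{Res}(\neg B)$; $[\vec a]_{\psi_1\vee\psi_2}\mapsto[\vec a]^\downarrow_{\psi_1}[\vec a]_{\psi_2}$; $[\vec a]^\downarrow_\psi\mathrm{Res}(\mathsf{true})\mapsto\mathrm{Res}(\mathsf{true})$; $[\vec a]^\downarrow_\psi\mathrm{Res}(\mathsf{false})\mapsto[\vec a]_\psi$; $[\vec a]_{\exists P.\psi}\mapsto[F\mid\vec a]_{\exists P.\psi}$; with $\sigma'=\{\vec a/\vec v,\vec b/\vec w\}$ ($\vec w$ the variables of $P$ not in $\vec v$) and $F'=F''\circ\sigma'(P_!\circ P_?)$: $[F'\mid\vec a]_{\exists P.\psi}\mapsto[F''\circ\sigma'(P_!)\mid\vec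 a]_{\exists P.\psi}[\vec a,\vec b]^{\vec v,\vec w}_\psi$; $[F'\mid\vec a]_{\exists P.\psi}\mathrm{Res}(\mathsf{false})\mapsto[F'\mid\vec a]_{\exists P.\psi}$; $[F'\mid\vec a]_{\exists P.\psi}\mathrm{Res}(\mathsf{true})\mapsto\mathrm{Res}(\mathsf{true})$; if no matching exists, $[F'\mid\vec a]_{\exists P.\psi}\mapsto\mathrm{Res}(\mathsf{false})$. $\mathcal{R}^{\mathrm{dml}}_{\Sigma,\mathcal{D}}(Q)$: states $\{F,F',F_\star,S\}^d$, terminal $\mathrm{New}(G,G_\star)$, $\mathrm{Fail}(G,G_\star)$. With ''$X\mapsto Y$'' meaning $\{F,F',F_\star,S\,X\}^d\to\{F,F',F_\star,S\,Y\}^d$: $\mathrm{Ok}\,\mathrm{Ok}\mapsto\mathrm{Ok}$; $[\vec a]_{\mathrm{ok}}\mapsto\mathrm{Ok}$; $[\vec a]_\emptyset\mapsto$ (nothing); $\{F,F',F_\star,S[\vec a]_f\}^d\to\{F,F'\circ\sigma(f),F_\star,S\,\mathrm{Ok}\}^d$; $[\vec a]_{R_1\oplus R_2}\mapsto[\vec a]^\downarrow_{R_2}[\vec a]_{R_1}$; $[\vec a]^\downarrow_{R_2}\mathrm{Ok}\mapsto\mathrm{Ok}[\vec a]_{R_2}$; $[\vec a]^\downarrow_{R_2}\mapsto[\vec a]_{R_2}$ (top frame); $[\vec a]_{\varphi\Rightarrow R}\mapsto[\vec a\mid[\vec a]^{\vec v}_\varphi]_R$; $[\vec a\mid\mathrm{Res}(\mathsf{false})]_R\mapsto$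 (nothing); $[\vec a\mid\mathrm{Res}(\mathsf{true})]_R\mapsto[\vec a]_R$; for each condition rule $\{F,S'\}^c\to\{F,S''\}^c$, $[\vec a\mid S']_R\mapsto[\vec a\mid S'']_R$; $[\vec a]_{\mathrm{From}\,P.R}\mapsto[F\mid\vec a\mid\mathsf{false}]_{\mathrm{From}\,P.R}$; if $F=G\circ\sigma'(P_!\circ P_?\circ P_0)$, $H=H'\circ\sigma'(P_!\circ P_?\circ P_0)$, $F_\star=K\circ\sigma'(P_\star)$, then $\{F,F',F_\star,S[H\mid\vec a\mid B]_{\mathrm{From}\,P.R}\}^d\to\{G\circ\sigma'(P_!\circ P_?),F',K\circ\upsilon(\sigma'(P_\star)),S[H'\circ\sigma'(P_!)\mid\vec a\mid B,\sigma'(P_0)]_{\mathrm{From}\,P.R}[\vec a,\vec b]^{\vec v,\vec w}_R\}^d$; $\{F,F',F_\star,S[H\mid\vec a\mid B,F_0]_{\mathrm{From}\,P.R}\}^d\to\{F\circ F_0,F',F_\star,S[H\circ F_0\mid\vec a\mid B]_{\mathrm{From}\,P.R}\}^d$; $[H\mid\vec a\mid B,F_0]_{\mathrm{From}\,P.R}\mathrm{Ok}\mapsto[H\mid\vec a\mid\mathsf{true}]_{\mathrm{From}\,P.R}$; if $H$ matches no $H'\circ\sigma'(P_!\circ P_?\circ P_0)$, $[H\mid\vec a\mid B]_{\mathrm{From}\,P.R}\mapsto\delta(B)$ ($\delta(\mathsf{true})=\mathrm{Ok}$, $\delta(\mathsf{false})$ = nothing); $\{F,F',F_\star,\mathrm{Ok}\}^d\to\mathrm{New}(F\circ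 F',F_\star)$; $\{F,F',F_\star,\text{empty}\}^d\to\mathrm{Fail}(F\circ F',F_\star)$. Nominal equivalence: $t_1\equiv_\star t_2$ iff there is a sort-preserving bijection $\alpha:\mathrm{Nom}(t_1)\to\mathrm{Nom}(t_2)$ between the sets of nominal values occurring in them whose extension $\hat\alpha$ (replacing each nominal value $x$ by $\alpha(x)$, leaving other constants and variables fixed, commuting with non-nominal operators) satisfies $\hat\alpha(t_1)=t_2$. Freshness condition: a state term $t$ satisfies it iff $m>n$ whenever $t$ contains a fresh fact $C_s(\iota^s_m)$ at some position and an occurrence of $\iota^s_n$ at a position other than the argument of that fresh fact. *)

(* Defs.v *)
From Stdlib Require List.
From Stdlib Require Import Permutation.
From mathcomp Require Import all_boot.

Set Implicit Arguments.
Unset Strict Implicit.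
Unset Printing Implicit Defensive.

(* multiset equality of two lists, up to an element relation r:
   l1 is pointwise r-related to some permutation of l2 *)
Definition mrel (A : Type) (r : A -> A -> Prop) (l1 l2 : seq A) : Prop :=
  exists2 l, Permutation l2 l & List.Forall2 r l1 l.

(* Terms of the signature Sigma.  NS = nominal sorts, Fs = (non-nominal)
   operator symbols; nominal values iota^s_n are TNom s n; variables TVar x. *)
Section Terms.
Variables (NS : eqType) (Fs : Type).

Inductive term : Type :=
| TVar of nat
| TNom of NS & nat
| TOp of Fs & seq term.

Fixpoint ren (a : NS -> nat -> nat) (t : term) : term :=
  match t with
  | TVar x => TVar x
  | TNom s n => TNom s (a s n)
  | TOp f ts => TOp f (map (ren a) ts)
  end.

Fixpoint tnoms (t : term) : seq (NS * nat) :=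
  match t with
  | TVar _ => [::]
  | TNom s n => [:: (s, n)]
  | TOp _ ts => flatten (map tnoms ts)
  end.

Fixpoint tvars (t : term) : seq nat :=
  match t with
  | TVar x => [:: x]
  | TNom _ _ => [::]
  | TOp _ ts => flatten (map tvars ts)
  end.

Fixpoint subst (sg : nat -> term) (t : term) : term :=
  match t with
  | TVar x => sg x
  | TNom s n => TNom s n
  | TOp f ts => TOp f (map (subst sg) ts)
  end.

Definition ground (t : term) : bool := nilp (tvars t).

End Terms.

Arguments TVar {NS Fs} _.
Arguments TNom {NS Fs} _ _.
Arguments TOp {NS Fs} _ _.

(* The data algebra D presented by structural axioms A and equations E.
   aeq  = equality modulo the structural axioms A,
   deq  = equality in D (modulo E u A).
   "Nominal values carry no structure besides equality" is expressed by
   invariance of both equalities under every injective sort-preserving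
   renaming of nominal values, and distinctness of nominal values. *)
Record data_algebra (NS : eqType) (Fs : Type) := DataAlgebra {
  deq : term NS Fs -> term NS Fs -> Prop;
  aeq : term NS Fs -> term NS Fs -> Prop;
  b_true : Fs;
  b_false : Fs;
  b_not : Fs;
  deq_refl : forall t, deq t t;
  deq_sym : forall t u, deq t u -> deq u t;
  deq_trans : forall t u v, deq t u -> deq u v -> deq t v;
  deq_op : forall f ts us, List.Forall2 deq ts us -> deq (TOp f ts) (TOp f us);
  deq_ren : forall a : NS -> nat -> nat, (forall s, injective (a s)) ->
              forall t u, deq (ren a t) (ren a u) <-> deq t u;
  deq_nom : forall s n s' m, deq (TNom s n) (TNom s' m) -> (s, n) = (s', m);
  aeq_refl : forall t, aeq t t;
  aeq_sym : forall t u, aeq t u -> aeq u t;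
  aeq_trans : forall t u v, aeq t u -> aeq u v -> aeq t v;
  aeq_op : forall f ts us, List.Forall2 aeq ts us -> aeq (TOp f ts) (TOp f us);
  aeq_deq : forall t u, aeq t u -> deq t u;
  aeq_subst : forall (sg : nat -> term NS Fs) t u, aeq t u -> aeq (subst sg t) (subst sg u);
  aeq_ren : forall a : NS -> nat -> nat, (forall s, injective (a s)) ->
              forall t u, aeq (ren a t) (ren a u) <-> aeq t u;
  aeq_noms : forall t u, aeq t u -> tnoms t =i tnoms u;
  aeq_vars : forall t u, aeq t u -> tvars t =i tvars u;
  true_neq_false : ~ deq (TOp b_true [::]) (TOp b_false [::]);
  not_true : deq (TOp b_not [:: TOp b_true [::]]) (TOp b_false [::]);
  not_false : deq (TOp b_not [:: TOp b_false [::]]) (TOp b_true [::])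
}.

Section Syntax.
Variables (NS : eqType) (Fs : Type).
Local Notation term := (term NS Fs).

(* P = [P_!]_! o [P_?]_? o [P_0]_0 o [P_star]_star ; a fresh-fact pattern
   C_s(u) is the pair (s, u). *)
Record pattern := Pat {
  p_bang : seq term;
  p_q : seq term;
  p_0 : seq term;
  p_star : seq (NS * term)
}.

Inductive cond :=
| CFalse
| CBool of term
| CNeg of cond
| COr of cond & cond
| CEx of pattern & cond.

Inductive dml :=
| QEmpty
| QOk
| QFact of term
| QPlus of dml & dml
| QImp of cond & dml
| QFrom of pattern & dml.

(* an environment [a]^{v}: the variables v paired with the values a *)
Definition env := seq (nat * term).

Fixpoint lookup (e : env) (x : nat) : term :=
  match e with
  | [::] => TVar x
  | p :: e' => if p.1 == x then p.2 else lookup e' x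
  end.

(* items of condition-evaluation stacks {F, S}^c *)
Inductive citem :=
| CIFrame of env & cond                       (* [a]_psi *)
| CIRes of term
| CINot
| CIOrK of env & cond                         (* [a]^down_psi *)
| CIEx of seq term & env & pattern & cond.    (* [H | a]_{exists P. psi} *)

Inductive ditem :=
| DIFrame of env & dml                        (* [a]_R *)
| DIOk
| DIPlusK of env & dml                        (* [a]^down_R *)
| DICond of env & seq citem & dml             (* [a | S']_R *)
| DIFrom of seq term & env & bool & option (seq term) & pattern & dml.
        (* [H | a | B]_{From P.R}  (None)  /  [H | a | B, F0]_{From P.R} (Some F0) *)

(* state terms: {F, F', F_star, S}^d, New(G, G_star), Fail(G, G_star);
   a fresh fact C_s(iota^s_m) is the pair (s, m); stacks have top at the end *)
Inductive state :=
| St of seq term & seq term & seq (NS * nat) & seq ditem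
| SNew of seq term & seq (NS * nat)
| SFail of seq term & seq (NS * nat).

Definition lren (a : NS -> nat -> nat) (l : seq term) := map (ren a) l.
Definition pren (a : NS -> nat -> nat) (P : pattern) : pattern :=
  Pat (lren a (p_bang P)) (lren a (p_q P)) (lren a (p_0 P))
      (map (fun p => (p.1, ren a p.2)) (p_star P)).
Fixpoint cren (a : NS -> nat -> nat) (c : cond) : cond :=
  match c with
  | CFalse => CFalse
  | CBool B => CBool (ren a B)
  | CNeg c' => CNeg (cren a c')
  | COr c1 c2 => COr (cren a c1) (cren a c2)
  | CEx P c' => CEx (pren a P) (cren a c')
  end.
Fixpoint qren (a : NS -> nat -> nat) (q : dml) : dml :=
  match q with
  | QEmpty => QEmpty
  | QOk => QOk
  | QFact f => QFact (ren a f)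
  | QPlus q1 q2 => QPlus (qren a q1) (qren a q2)
  | QImp c q' => QImp (cren a c) (qren a q')
  | QFrom P q' => QFrom (pren a P) (qren a q')
  end.
Definition eren (a : NS -> nat -> nat) (e : env) : env := map (fun p => (p.1, ren a p.2)) e.
Definition ciren (a : NS -> nat -> nat) (c : citem) : citem :=
  match c with
  | CIFrame e psi => CIFrame (eren a e) (cren a psi)
  | CIRes B => CIRes (ren a B)
  | CINot => CINot
  | CIOrK e psi => CIOrK (eren a e) (cren a psi)
  | CIEx H e P psi => CIEx (lren a H) (eren a e) (pren a P) (cren a psi)
  end.
Definition diren (a : NS -> nat -> nat) (d : ditem) : ditem :=
  match d with
  | DIFrame e R => DIFrame (eren a e) (qren a R)
  | DIOk => DIOk
  | DIPlusK e R => DIPlusK (eren a e) (qren a R)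
  | DICond e cs R => DICond (eren a e) (map (ciren a) cs) (qren a R)
  | DIFrom H e B F0 P R =>
      DIFrom (lren a H) (eren a e) B (omap (lren a) F0) (pren a P) (qren a R)
  end.
Definition fren (a : NS -> nat -> nat) (fs : seq (NS * nat)) := map (fun p => (p.1, a p.1 p.2)) fs.
Definition sren (a : NS -> nat -> nat) (t : state) : state :=
  match t with
  | St F F' Fs Sk => St (lren a F) (lren a F') (fren a Fs) (map (diren a) Sk)
  | SNew G Gs => SNew (lren a G) (fren a Gs)
  | SFail G Gs => SFail (lren a G) (fren a Gs)
  end.

Definition lnoms (l : seq term) := flatten (map (@tnoms _ _) l).
Definition pnoms (P : pattern) :=
  lnoms (p_bang P) ++ lnoms (p_q P) ++ lnoms (p_0 P)
  ++ flatten (map (fun p => tnoms p.2) (p_star P)).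
Fixpoint cnoms (c : cond) :=
  match c with
  | CFalse => [::]
  | CBool B => tnoms B
  | CNeg c' => cnoms c'
  | COr c1 c2 => cnoms c1 ++ cnoms c2
  | CEx P c' => pnoms P ++ cnoms c'
  end.
Fixpoint qnoms (q : dml) :=
  match q with
  | QEmpty => [::]
  | QOk => [::]
  | QFact f => tnoms f
  | QPlus q1 q2 => qnoms q1 ++ qnoms q2
  | QImp c q' => cnoms c ++ qnoms q'
  | QFrom P q' => pnoms P ++ qnoms q'
  end.
Definition enoms (e : env) := flatten (map (fun p => tnoms p.2) e).
Definition cinoms (c : citem) :=
  match c with
  | CIFrame e psi => enoms e ++ cnoms psi
  | CIRes B => tnoms B
  | CINot => [::]
  | CIOrK e psi => enoms e ++ cnoms psi
  | CIEx H e P psi => lnoms H ++ enoms e ++ pnoms P ++ cnoms psi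
  end.
Definition dinoms (d : ditem) :=
  match d with
  | DIFrame e R => enoms e ++ qnoms R
  | DIOk => [::]
  | DIPlusK e R => enoms e ++ qnoms R
  | DICond e cs R => enoms e ++ flatten (map cinoms cs) ++ qnoms R
  | DIFrom H e B F0 P R =>
      lnoms H ++ enoms e ++ (if F0 is Some l then lnoms l else [::]) ++ pnoms P ++ qnoms R
  end.
Definition onoms (t : state) :=
  match t with
  | St F F' _ Sk => lnoms F ++ lnoms F' ++ flatten (map dinoms Sk)
  | SNew G _ => lnoms G
  | SFail G _ => lnoms G
  end.
Definition ffacts (t : state) :=
  match t with
  | St _ _ Fs _ => Fs
  | SNew _ Gs => Gs
  | SFail _ Gs => Gs
  end.
Definition snoms (t : state) := onoms t ++ ffacts t.

Definition fresh_state (t : state) : Prop :=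
  forall x, x \in ffacts t ->
  forall y, y \in onoms t ++ rem x (ffacts t) -> y.1 = x.1 -> y.2 < x.2.

Definition pvars (P : pattern) : seq nat :=
  flatten (map (@tvars _ _) (p_bang P ++ p_q P ++ p_0 P))
  ++ flatten (map (fun p => tvars p.2) (p_star P)).
Definition newvars (P : pattern) (e : env) : seq nat :=
  sort leq (undup [seq x <- pvars P | x \notin map fst e]).
Definition extend (e : env) (P : pattern) (b : nat -> term) : env :=
  e ++ [seq (w, b w) | w <- newvars P e].
Definition bground (e : env) (P : pattern) (b : nat -> term) : bool :=
  all (fun w => ground (b w)) (newvars P e).
Definition inst (e : env) (l : seq term) : seq term := map (subst (lookup e)) l.
Definition upsilon (fs : seq (NS * nat)) := map (fun p => (p.1, p.2.+1)) fs.

End Syntax.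

Arguments CFalse {NS Fs}.
Arguments QEmpty {NS Fs}.
Arguments QOk {NS Fs}.
Arguments CINot {NS Fs}.
Arguments DIOk {NS Fs}.

Section Equality.
Variables (NS : eqType) (Fs : Type) (D : data_algebra NS Fs).
Local Notation term := (term NS Fs).
Local Notation aeq := (aeq D).

Definition lrel (l1 l2 : seq term) := mrel aeq l1 l2.
Definition patrel (P1 P2 : pattern NS Fs) :=
  [/\ lrel (p_bang P1) (p_bang P2), lrel (p_q P1) (p_q P2),
      lrel (p_0 P1) (p_0 P2) &
      mrel (fun p q : NS * term => p.1 = q.1 /\ aeq p.2 q.2) (p_star P1) (p_star P2)].
Fixpoint condrel (c1 c2 : cond NS Fs) : Prop :=
  match c1, c2 with
  | CFalse, CFalse => True
  | CBool B1, CBool B2 => aeq B1 B2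
  | CNeg c1', CNeg c2' => condrel c1' c2'
  | COr a1 b1, COr a2 b2 => condrel a1 a2 /\ condrel b1 b2
  | CEx P1 c1', CEx P2 c2' => patrel P1 P2 /\ condrel c1' c2'
  | _, _ => False
  end.
Fixpoint dmlrel (q1 q2 : dml NS Fs) : Prop :=
  match q1, q2 with
  | QEmpty, QEmpty => True
  | QOk, QOk => True
  | QFact f1, QFact f2 => aeq f1 f2
  | QPlus a1 b1, QPlus a2 b2 => dmlrel a1 a2 /\ dmlrel b1 b2
  | QImp c1 r1, QImp c2 r2 => condrel c1 c2 /\ dmlrel r1 r2
  | QFrom P1 r1, QFrom P2 r2 => patrel P1 P2 /\ dmlrel r1 r2
  | _, _ => False
  end.
Definition envrel (e1 e2 : env NS Fs) :=
  List.Forall2 (fun p q => p.1 = q.1 /\ aeq p.2 q.2) e1 e2.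
Definition cirel (c1 c2 : citem NS Fs) : Prop :=
  match c1, c2 with
  | CIFrame e1 p1, CIFrame e2 p2 => envrel e1 e2 /\ condrel p1 p2
  | CIRes B1, CIRes B2 => aeq B1 B2
  | CINot, CINot => True
  | CIOrK e1 p1, CIOrK e2 p2 => envrel e1 e2 /\ condrel p1 p2
  | CIEx H1 e1 P1 p1, CIEx H2 e2 P2 p2 =>
      [/\ lrel H1 H2, envrel e1 e2, patrel P1 P2 & condrel p1 p2]
  | _, _ => False
  end.
Definition direl (d1 d2 : ditem NS Fs) : Prop :=
  match d1, d2 with
  | DIFrame e1 R1, DIFrame e2 R2 => envrel e1 e2 /\ dmlrel R1 R2
  | DIOk, DIOk => True
  | DIPlusK e1 R1, DIPlusK e2 R2 => envrel e1 e2 /\ dmlrel R1 R2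
  | DICond e1 cs1 R1, DICond e2 cs2 R2 =>
      [/\ envrel e1 e2, List.Forall2 cirel cs1 cs2 & dmlrel R1 R2]
  | DIFrom H1 e1 B1 F01 P1 R1, DIFrom H2 e2 B2 F02 P2 R2 =>
      [/\ lrel H1 H2, envrel e1 e2, B1 = B2,
          (match F01, F02 with
          | None, None => True
          | Some l1, Some l2 => lrel l1 l2
          | _, _ => False
          end) & patrel P1 P2 /\ dmlrel R1 R2]
  | _, _ => False
  end.
Definition steq (t1 t2 : state NS Fs) : Prop :=
  match t1, t2 with
  | St F1 F1' Fs1 S1, St F2 F2' Fs2 S2 =>
      [/\ lrel F1 F2, lrel F1' F2', Permutation Fs1 Fs2 & List.Forall2 direl S1 S2]
  | SNew G1 Gs1, SNew G2 Gs2 => lrel G1 G2 /\ Permutation Gs1 Gs2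
  | SFail G1 Gs1, SFail G2 Gs2 => lrel G1 G2 /\ Permutation Gs1 Gs2
  | _, _ => False
  end.

Definition nom_equiv (t1 t2 : state NS Fs) : Prop :=
  exists alpha : NS -> nat -> nat,
    [/\ (forall s n m, (s, n) \in snoms t1 -> (s, m) \in snoms t1 ->
           alpha s n = alpha s m -> n = m),
        (forall s n, (s, n) \in snoms t1 -> (s, alpha s n) \in snoms t2),
        (forall s k, (s, k) \in snoms t2 -> exists2 n, (s, n) \in snoms t1 & alpha s n = k) &
        steq (sren alpha t1) t2].

End Equality.

Section Rules.
Variables (NS : eqType) (Fs : Type) (D : data_algebra NS Fs).
Local Notation term := (term NS Fs).
Local Notation deq := (deq D).

Definition tT : term := TOp (b_true D) [::].
Definition tF : term := TOp (b_false D) [::].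

Definition meq (l1 l2 : seq term) := mrel deq l1 l2.

Definition matches_ex (H : seq term) (e : env NS Fs) (P : pattern NS Fs) : Prop :=
  exists b H', bground e P b /\
    meq H (H' ++ inst (extend e P b) (p_bang P ++ p_q P)).
Definition matches_from (H : seq term) (e : env NS Fs) (P : pattern NS Fs) : Prop :=
  exists b H', bground e P b /\
    meq H (H' ++ inst (extend e P b) (p_bang P ++ p_q P ++ p_0 P)).

Definition fmatch (e : env NS Fs) (Pstar : seq (NS * term)) (fs : seq (NS * nat)) : Prop :=
  map fst fs = map fst Pstar /\
  List.Forall2 (fun p q => deq (subst (lookup e) p.2) (TNom q.1 q.2)) Pstar fs.

Inductive cstep (F : seq term) : seq (citem NS Fs) -> seq (citem NS Fs) -> Prop :=
| CS_False Sk e :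
    cstep F (rcons Sk (CIFrame e CFalse)) (rcons Sk (CIRes tF))
| CS_Bool Sk e B :
    cstep F (rcons Sk (CIFrame e (CBool B))) (rcons Sk (CIRes (subst (lookup e) B)))
| CS_Neg Sk e psi :
    cstep F (rcons Sk (CIFrame e (CNeg psi))) (Sk ++ [:: CINot; CIFrame e psi])
| CS_Not Sk B :
    cstep F (Sk ++ [:: CINot; CIRes B]) (rcons Sk (CIRes (TOp (b_not D) [:: B])))
| CS_Or Sk e psi1 psi2 :
    cstep F (rcons Sk (CIFrame e (COr psi1 psi2))) (Sk ++ [:: CIOrK e psi1; CIFrame e psi2])
| CS_OrTrue Sk e psi B : deq B tT ->
    cstep F (Sk ++ [:: CIOrK e psi; CIRes B]) (rcons Sk (CIRes tT))
| CS_OrFalse Sk e psi B : deq B tF ->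
    cstep F (Sk ++ [:: CIOrK e psi; CIRes B]) (rcons Sk (CIFrame e psi))
| CS_ExInit Sk e P psi :
    cstep F (rcons Sk (CIFrame e (CEx P psi))) (rcons Sk (CIEx F e P psi))
| CS_ExMatch Sk H e P psi b H'' :
    bground e P b ->
    meq H (H'' ++ inst (extend e P b) (p_bang P ++ p_q P)) ->
    cstep F (rcons Sk (CIEx H e P psi))
            (Sk ++ [:: CIEx (H'' ++ inst (extend e P b) (p_bang P)) e P psi;
                      CIFrame (extend e P b) psi])
| CS_ExFalse Sk H e P psi B : deq B tF ->
    cstep F (Sk ++ [:: CIEx H e P psi; CIRes B]) (rcons Sk (CIEx H e P psi))
| CS_ExTrue Sk H e P psi B : deq B tT ->
    cstep F (Sk ++ [:: CIEx H e P psi; CIRes B]) (rcons Sk (CIRes tT))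
| CS_ExNoMatch Sk H e P psi : ~ matches_ex H e P ->
    cstep F (rcons Sk (CIEx H e P psi)) (rcons Sk (CIRes tF)).

Inductive dstep : state NS Fs -> state NS Fs -> Prop :=
| DS_OkOk F F' Fs Sk :
    dstep (St F F' Fs (Sk ++ [:: DIOk; DIOk])) (St F F' Fs (rcons Sk DIOk))
| DS_Ok F F' Fs Sk e :
    dstep (St F F' Fs (rcons Sk (DIFrame e QOk))) (St F F' Fs (rcons Sk DIOk))
| DS_Empty F F' Fs Sk e :
    dstep (St F F' Fs (rcons Sk (DIFrame e QEmpty))) (St F F' Fs Sk)
| DS_Fact F F' Fs Sk e f :
    dstep (St F F' Fs (rcons Sk (DIFrame e (QFact f))))
          (St F (rcons F' (subst (lookup e) f)) Fs (rcons Sk DIOk))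
| DS_Plus F F' Fs Sk e R1 R2 :
    dstep (St F F' Fs (rcons Sk (DIFrame e (QPlus R1 R2))))
          (St F F' Fs (Sk ++ [:: DIPlusK e R2; DIFrame e R1]))
| DS_PlusOk F F' Fs Sk e R2 :
    dstep (St F F' Fs (Sk ++ [:: DIPlusK e R2; DIOk]))
          (St F F' Fs (Sk ++ [:: DIOk; DIFrame e R2]))
| DS_PlusTop F F' Fs Sk e R2 :
    dstep (St F F' Fs (rcons Sk (DIPlusK e R2))) (St F F' Fs (rcons Sk (DIFrame e R2)))
| DS_Imp F F' Fs Sk e phi R :
    dstep (St F F' Fs (rcons Sk (DIFrame e (QImp phi R))))
          (St F F' Fs (rcons Sk (DICond e [:: CIFrame e phi] R)))
| DS_CondFalse F F' Fs Sk e B R : deq B tF ->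
    dstep (St F F' Fs (rcons Sk (DICond e [:: CIRes B] R))) (St F F' Fs Sk)
| DS_CondTrue F F' Fs Sk e B R : deq B tT ->
    dstep (St F F' Fs (rcons Sk (DICond e [:: CIRes B] R)))
          (St F F' Fs (rcons Sk (DIFrame e R)))
| DS_Cond F F' Fs Sk e cs cs' R : cstep F cs cs' ->
    dstep (St F F' Fs (rcons Sk (DICond e cs R))) (St F F' Fs (rcons Sk (DICond e cs' R)))
| DS_FromInit F F' Fs Sk e P R :
    dstep (St F F' Fs (rcons Sk (DIFrame e (QFrom P R))))
          (St F F' Fs (rcons Sk (DIFrom F e false None P R)))
| DS_FromMatch F F' Fs Sk H e B P R b G H' K fs :
    bground e P b ->
    meq F (G ++ inst (extend e P b) (p_bang P ++ p_q P ++ p_0 P)) ->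
    meq H (H' ++ inst (extend e P b) (p_bang P ++ p_q P ++ p_0 P)) ->
    Permutation Fs (K ++ fs) ->
    fmatch (extend e P b) (p_star P) fs ->
    dstep (St F F' Fs (rcons Sk (DIFrom H e B None P R)))
          (St (G ++ inst (extend e P b) (p_bang P ++ p_q P)) F' (K ++ upsilon fs)
              (Sk ++ [:: DIFrom (H' ++ inst (extend e P b) (p_bang P)) e B
                               (Some (inst (extend e P b) (p_0 P))) P R;
                        DIFrame (extend e P b) R]))
| DS_FromRestore F F' Fs Sk H e B F0 P R :
    dstep (St F F' Fs (rcons Sk (DIFrom H e B (Some F0) P R)))
          (St (F ++ F0) F' Fs (rcons Sk (DIFrom (H ++ F0) e B None P R)))
| DS_FromOk F F' Fs Sk H e B F0 P R :
    dstep (St F F' Fs (Sk ++ [:: DIFrom H e B (Some F0) P R; DIOk]))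
          (St F F' Fs (rcons Sk (DIFrom H e true None P R)))
| DS_FromNoMatch F F' Fs Sk H e B P R : ~ matches_from H e P ->
    dstep (St F F' Fs (rcons Sk (DIFrom H e B None P R)))
          (St F F' Fs (if B then rcons Sk DIOk else Sk))
| DS_New F F' Fs :
    dstep (St F F' Fs [:: DIOk]) (SNew (F ++ F') Fs)
| DS_Fail F F' Fs :
    dstep (St F F' Fs [::]) (SFail (F ++ F') Fs).

End Rules.

(* Main.v *)
Require Import Defs.
From Stdlib Require List.
From Stdlib Require Import Permutation.
From mathcomp Require Import all_boot.

Set Implicit Arguments.
Unset Strict Implicit.
Unset Printing Implicit Defensive.

Section Gen.
Lemma F2_map A B A' B' (r : A -> B -> Prop) (r' : A' -> B' -> Prop) (f : A -> A') (g : B -> B') l1 l2 :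
  (forall x y, r x y -> r' (f x) (g y)) -> List.Forall2 r l1 l2 -> List.Forall2 r' (map f l1) (map g l2).
Proof. move=> H; elim=> [|x y l1' l2' rxy _ IH] //=; constructor; auto. Qed.

Lemma F2_impl A B (r r' : A -> B -> Prop) l1 l2 :
  (forall x y, r x y -> r' x y) -> List.Forall2 r l1 l2 -> List.Forall2 r' l1 l2.
Proof. move=> H; elim=> [|x y l1' l2' rxy _ IH] //=; constructor; auto. Qed.

Lemma F2_sym A B (r : A -> B -> Prop) (r' : B -> A -> Prop) l1 l2 :
  (forall x y, r x y -> r' y x) -> List.Forall2 r l1 l2 -> List.Forall2 r' l2 l1.
Proof. move=> H; elim=> [|x y l1' l2' rxy _ IH] //=; constructor; auto. Qed.

Lemma F2_refl A (r : A -> A -> Prop) l : (forall x, r x x) -> List.Forall2 r l l.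
Proof. move=> H; elim: l => [|x l IH]; constructor; auto. Qed.

Lemma F2_trans A B C (r1 : A -> B -> Prop) (r2 : B -> C -> Prop) (r3 : A -> C -> Prop) l1 l2 l3 :
  (forall x y z, r1 x y -> r2 y z -> r3 x z) ->
  List.Forall2 r1 l1 l2 -> List.Forall2 r2 l2 l3 -> List.Forall2 r3 l1 l3.
Proof.
move=> H F; elim: F l3 => [|x y l1' l2' rxy _ IH] l3 F'; inversion F'; subst; constructor; eauto.
Qed.

Lemma F2_rcons_inv A B (r : A -> B -> Prop) s x l :
  List.Forall2 r (rcons s x) l -> exists s' y, [/\ l = rcons s' y, List.Forall2 r s s' & r x y].
Proof.
rewrite -cats1 => /List.Forall2_app_inv_l [l1 [l2 [H1 [H2 ->]]]].
inversion H2; subst. inversion H5; subst. exists l1, y; split => //; by rewrite -cats1.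
Qed.

Lemma F2_cat2_inv A B (r : A -> B -> Prop) s x z l :
  List.Forall2 r (s ++ [:: x; z]) l -> exists s' y w, [/\ l = s' ++ [:: y; w], List.Forall2 r s s', r x y & r z w].
Proof.
move=> /List.Forall2_app_inv_l [l1 [l2 [H1 [H2 ->]]]].
inversion H2; subst. inversion H5; subst. inversion H7; subst. by exists l1, y, y0.
Qed.

Lemma F2_rcons A B (r : A -> B -> Prop) s s' x y :
  List.Forall2 r s s' -> r x y -> List.Forall2 r (rcons s x) (rcons s' y).
Proof. move=> H1 H2; rewrite -!cats1; apply: List.Forall2_app => //; by constructor. Qed.

Lemma F2_cat2 A B (r : A -> B -> Prop) s s' x y z w :
  List.Forall2 r s s' -> r x y -> r z w -> List.Forall2 r (s ++ [:: x; z]) (s' ++ [:: y; w]).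
Proof. move=> H1 H2 H3; apply: List.Forall2_app => //; repeat constructor; auto. Qed.

Lemma mrel_refl A (r : A -> A -> Prop) l : (forall x, r x x) -> mrel r l l.
Proof. move=> H; exists l => //; exact: F2_refl. Qed.

Lemma mrel_sym A (r : A -> A -> Prop) l1 l2 : (forall x y, r x y -> r y x) -> mrel r l1 l2 -> mrel r l2 l1.
Proof.
move=> H [l Hp Hf].
have Hf' : List.Forall2 r l l1 by apply: F2_sym Hf.
have [l' [Hp' Hf'']] := Permutation_Forall2 (Permutation_sym Hp) Hf'.
exists l' => //. 
Qed.

Lemma mrel_trans A (r : A -> A -> Prop) l1 l2 l3 : (forall x y z, r x y -> r y z -> r x z) ->
  mrel r l1 l2 -> mrel r l2 l3 -> mrel r l1 l3.
Proof.
move=> H [l Hp Hf] [m Hq Hg].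
have [m' [Hm Hg']] := Permutation_Forall2 Hp Hg.
exists m'; first exact: Permutation_trans Hq Hm.
exact: F2_trans Hf Hg'.
Qed.

Lemma mrel_map A A' (r : A -> A -> Prop) (r' : A' -> A' -> Prop) (f : A -> A') l1 l2 :
  (forall x y, r x y -> r' (f x) (f y)) -> mrel r l1 l2 -> mrel r' (map f l1) (map f l2).
Proof. move=> H [l Hp Hf]; exists (map f l); [exact: Permutation_map | exact: F2_map Hf]. Qed.

Lemma mrel_impl A (r r' : A -> A -> Prop) l1 l2 :
  (forall x y, r x y -> r' x y) -> mrel r l1 l2 -> mrel r' l1 l2.
Proof. move=> H [l Hp Hf]; exists l => //; exact: F2_impl Hf. Qed.

Lemma mrel_app A (r : A -> A -> Prop) a b c d : mrel r a b -> mrel r c d -> mrel r (a ++ c) (b ++ d).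
Proof.
move=> [l Hp Hf] [m Hq Hg]; exists (l ++ m); first exact: Permutation_app.
exact: List.Forall2_app.
Qed.

Lemma mrel_perm A (r : A -> A -> Prop) a b : (forall x, r x x) -> Permutation a b -> mrel r a b.
Proof. move=> H Hp; exists a; [exact: Permutation_sym | exact: F2_refl]. Qed.

Lemma perm_flatten_mem A (B : eqType) (N : A -> seq B) (l1 l2 : seq A) :
  Permutation l1 l2 -> flatten (map N l1) =i flatten (map N l2).
Proof.
elim=> [|x l l' _ IH|x y l|l l' l'' _ IH1 _ IH2] //= z.
- by rewrite !mem_cat IH.
- by rewrite !mem_cat orbCA.
- by rewrite IH1 IH2.
Qed.

Lemma F2_flatten_mem A (B : eqType) (r : A -> A -> Prop) (N : A -> seq B) (l1 l2 : seq A) :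
  (forall x y, r x y -> N x =i N y) -> List.Forall2 r l1 l2 -> flatten (map N l1) =i flatten (map N l2).
Proof. move=> H; elim=> [|x y a b rxy _ IH] //= z; by rewrite !mem_cat (H _ _ rxy) IH. Qed.

Lemma mrel_flatten_mem A (B : eqType) (r : A -> A -> Prop) (N : A -> seq B) (l1 l2 : seq A) :
  (forall x y, r x y -> N x =i N y) -> mrel r l1 l2 -> flatten (map N l1) =i flatten (map N l2).
Proof.
move=> H [l Hp Hf] z; rewrite (F2_flatten_mem H Hf).
by rewrite (perm_flatten_mem N Hp).
Qed.
End Gen.

Section TermL.
Variables (NS : eqType) (Fs : Type).
Local Notation term := (term NS Fs).

Fixpoint term_ind2 (P : term -> Prop) (Hv : forall x, P (TVar x)) (Hn : forall s n, P (TNom s n))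
  (Ho : forall f ts, List.Forall P ts -> P (TOp f ts)) (t : term) : P t :=
  match t with
  | TVar x => Hv x
  | TNom s n => Hn s n
  | TOp f ts => Ho f ts ((fix aux (l : seq term) : List.Forall P l :=
        match l with
        | [::] => @List.Forall_nil _ P
        | x :: l' => @List.Forall_cons _ P x l' (term_ind2 Hv Hn Ho x) (aux l')
        end) ts)
  end.

Definition cmp (a b : NS -> nat -> nat) := fun s n => a s (b s n).
Definition napp (a : NS -> nat -> nat) := fun p : NS * nat => (p.1, a p.1 p.2).
Definition agree (a b : NS -> nat -> nat) (X : seq (NS * nat)) :=
  forall p, p \in X -> a p.1 p.2 = b p.1 p.2.
Definition idn : NS -> nat -> nat := fun _ n => n.

Lemma agree_catl a b X Y : agree a b (X ++ Y) -> agree a b X.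
Proof. by move=> H p Hp; apply: H; rewrite mem_cat Hp. Qed.
Lemma agree_catr a b X Y : agree a b (X ++ Y) -> agree a b Y.
Proof. by move=> H p Hp; apply: H; rewrite mem_cat Hp orbT. Qed.

Lemma ren_comp a b (t : term) : ren a (ren b t) = ren (cmp a b) t.
Proof.
elim/term_ind2: t => //= f ts H; congr TOp; rewrite -map_comp.
by elim: H => //= x l Hx _ IH; rewrite Hx IH.
Qed.

Lemma ren_ext a b (t : term) : agree a b (tnoms t) -> ren a t = ren b t.
Proof.
elim/term_ind2: t => //= [s n|f ts H] Ha.
- by rewrite (Ha (s, n)) ?mem_head.
congr TOp; elim: H Ha => //= x l Hx _ IH Ha.
by rewrite Hx ?IH //; [apply: agree_catr Ha | apply: agree_catl Ha].
Qed.

Lemma ren_id (t : term) : ren idn t = t.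
Proof.
elim/term_ind2: t => //= f ts H; congr TOp.
by elim: H => //= x l Hx _ IH; rewrite Hx IH.
Qed.

Lemma tnoms_ren a (t : term) : tnoms (ren a t) = map (napp a) (tnoms t).
Proof.
elim/term_ind2: t => //= f ts H.
by elim: H => //= x l Hx _ IH; rewrite Hx IH map_cat.
Qed.

Lemma tvars_ren a (t : term) : tvars (ren a t) = tvars t.
Proof.
elim/term_ind2: t => //= f ts H.
by elim: H => //= x l Hx _ IH; rewrite Hx IH.
Qed.

Lemma subst_ren a sg sg' (t : term) : (forall x, sg' x = ren a (sg x)) ->
  ren a (subst sg t) = subst sg' (ren a t).
Proof.
move=> E; elim/term_ind2: t => //= f ts H; congr TOp; rewrite -!map_comp.
by elim: H => //= x l Hx _ IH; rewrite Hx IH.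
Qed.

Lemma aeq_subst_cong (D : data_algebra NS Fs) sg1 sg2 (t : term) :
  (forall x, aeq D (sg1 x) (sg2 x)) -> aeq D (subst sg1 t) (subst sg2 t).
Proof.
move=> E; elim/term_ind2: t => //= [s n|f ts H]; first exact: aeq_refl.
apply: aeq_op; elim: H => //= x l Hx _ IH; by constructor.
Qed.

Lemma aeq_subst2 (D : data_algebra NS Fs) sg1 sg2 (t u : term) :
  (forall x, aeq D (sg1 x) (sg2 x)) -> aeq D t u -> aeq D (subst sg1 t) (subst sg2 u).
Proof.
move=> E H; apply: (aeq_trans (aeq_subst sg1 H)); exact: aeq_subst_cong.
Qed.

End TermL.
Arguments idn {NS}.

Section StructRen.
Variables (NS : eqType) (Fs : Type).
Local Notation term := (term NS Fs).

Lemma lren_comp a b (l : seq term) : lren a (lren b l) = lren (cmp a b) l.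
Proof. rewrite /lren -map_comp; apply: eq_map => t /=; exact: ren_comp. Qed.
Lemma lren_ext a b (l : seq term) : agree a b (lnoms l) -> lren a l = lren b l.
Proof.
elim: l => //= x l IH H; rewrite /lnoms /= in H.
rewrite (ren_ext (agree_catl H)); congr cons; apply: IH; exact: agree_catr H.
Qed.
Lemma lren_id (l : seq term) : lren idn l = l.
Proof. by rewrite /lren (eq_map (@ren_id _ _)) map_id. Qed.
Lemma lnoms_ren a (l : seq term) : lnoms (lren a l) = map (napp a) (lnoms l).
Proof. rewrite /lnoms /lren; elim: l => //= x l IH; by rewrite tnoms_ren IH map_cat. Qed.
Lemma lren_cat a (l1 l2 : seq term) : lren a (l1 ++ l2) = lren a l1 ++ lren a l2.
Proof. exact: map_cat. Qed.
Lemma lnoms_cat (l1 l2 : seq term) : lnoms (l1 ++ l2) = lnoms l1 ++ lnoms l2.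
Proof. by rewrite /lnoms map_cat flatten_cat. Qed.

Section K.
Variable K : Type.
Definition kren a (l : seq (K * term)) := map (fun p => (p.1, ren a p.2)) l.
Definition knoms (l : seq (K * term)) := flatten (map (fun p => tnoms p.2) l).
Lemma kren_comp a b l : kren a (kren b l) = kren (cmp a b) l.
Proof. rewrite /kren -map_comp; apply: eq_map => t /=; by rewrite ren_comp. Qed.
Lemma kren_ext a b l : agree a b (knoms l) -> kren a l = kren b l.
Proof.
elim: l => //= x l IH H; rewrite /knoms /= in H.
rewrite (ren_ext (agree_catl H)); congr cons; apply: IH; exact: agree_catr H.
Qed.
Lemma kren_id l : kren idn l = l.
Proof. rewrite /kren; elim: l => //= [[k t] l] IH; by rewrite ren_id IH. Qed.
Lemma knoms_ren a l : knoms (kren a l) = map (napp a) (knoms l).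
Proof. rewrite /knoms /kren; elim: l => //= x l IH; by rewrite tnoms_ren IH map_cat. Qed.
End K.

Lemma pren_comp a b (P : pattern NS Fs) : pren a (pren b P) = pren (cmp a b) P.
Proof. case: P => ? ? ? ?; rewrite /pren /= !lren_comp; congr Pat; exact: (kren_comp a b). Qed.
Lemma pren_ext a b (P : pattern NS Fs) : agree a b (pnoms P) -> pren a P = pren b P.
Proof.
case: P => b1 q z st; rewrite /pnoms /pren /= => H.
rewrite (lren_ext (agree_catl H)); have {}H := agree_catr H.
rewrite (lren_ext (agree_catl H)); have {}H := agree_catr H.
rewrite (lren_ext (agree_catl H)); have {}H := agree_catr H.
congr Pat; exact: (kren_ext H).
Qed.
Lemma pren_id (P : pattern NS Fs) : pren idn P = P.
Proof. case: P => ? ? ? ?; rewrite /pren /= !lren_id; congr Pat; exact: kren_id. Qed.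
Lemma pnoms_ren a (P : pattern NS Fs) : pnoms (pren a P) = map (napp a) (pnoms P).
Proof.
case: P => ? ? ? st; rewrite /pnoms /= !lnoms_ren !map_cat; congr (_ ++ (_ ++ (_ ++ _))).
exact: (knoms_ren a st).
Qed.

Lemma cren_comp a b (c : cond NS Fs) : cren a (cren b c) = cren (cmp a b) c.
Proof. elim: c => [|B|c IH|c1 IH1 c2 IH2|P c IH] /=; by rewrite ?IH ?IH1 ?IH2 ?ren_comp ?pren_comp. Qed.
Lemma cren_ext a b (c : cond NS Fs) : agree a b (cnoms c) -> cren a c = cren b c.
Proof.
elim: c => //= [B|c IH|c1 IH1 c2 IH2|P c IH] H.
- by rewrite (ren_ext H).
- by rewrite IH.
- by rewrite IH1 ?IH2 //; [apply: agree_catr H|apply: agree_catl H].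
- by rewrite IH ?(pren_ext (agree_catl H)) //; apply: agree_catr H.
Qed.
Lemma cren_id (c : cond NS Fs) : cren idn c = c.
Proof. elim: c => [|B|c IH|c1 IH1 c2 IH2|P c IH] /=; by rewrite ?IH ?IH1 ?IH2 ?ren_id ?pren_id. Qed.
Lemma cnoms_ren a (c : cond NS Fs) : cnoms (cren a c) = map (napp a) (cnoms c).
Proof. elim: c => [|B|c IH|c1 IH1 c2 IH2|P c IH] /=; by rewrite ?IH ?IH1 ?IH2 ?tnoms_ren ?pnoms_ren ?map_cat. Qed.

Lemma qren_comp a b (c : dml NS Fs) : qren a (qren b c) = qren (cmp a b) c.
Proof. elim: c => [||B|c1 IH1 c2 IH2|P c IH|P c IH] /=; by rewrite ?IH ?IH1 ?IH2 ?ren_comp ?pren_comp ?cren_comp. Qed.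
Lemma qren_ext a b (c : dml NS Fs) : agree a b (qnoms c) -> qren a c = qren b c.
Proof.
elim: c => //= [B|c1 IH1 c2 IH2|P c IH|P c IH] H.
- by rewrite (ren_ext H).
- by rewrite IH1 ?IH2 //; [apply: agree_catr H|apply: agree_catl H].
- by rewrite IH ?(cren_ext (agree_catl H)) //; apply: agree_catr H.
- by rewrite IH ?(pren_ext (agree_catl H)) //; apply: agree_catr H.
Qed.
Lemma qren_id (c : dml NS Fs) : qren idn c = c.
Proof. elim: c => [||B|c1 IH1 c2 IH2|P c IH|P c IH] /=; by rewrite ?IH ?IH1 ?IH2 ?ren_id ?pren_id ?cren_id. Qed.
Lemma qnoms_ren a (c : dml NS Fs) : qnoms (qren a c) = map (napp a) (qnoms c).
Proof. elim: c => [||B|c1 IH1 c2 IH2|P c IH|P c IH] /=; by rewrite ?IH ?IH1 ?IH2 ?tnoms_ren ?pnoms_ren ?cnoms_ren ?map_cat. Qed.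

Lemma eren_comp a b (e : env NS Fs) : eren a (eren b e) = eren (cmp a b) e.
Proof. exact: kren_comp. Qed.
Lemma eren_ext a b (e : env NS Fs) : agree a b (enoms e) -> eren a e = eren b e.
Proof. exact: kren_ext. Qed.
Lemma eren_id (e : env NS Fs) : eren idn e = e.
Proof. exact: kren_id. Qed.
Lemma enoms_ren a (e : env NS Fs) : enoms (eren a e) = map (napp a) (enoms e).
Proof. exact: knoms_ren. Qed.

Lemma ciren_comp a b (c : citem NS Fs) : ciren a (ciren b c) = ciren (cmp a b) c.
Proof. case: c => *; by rewrite /= ?ren_comp ?eren_comp ?cren_comp ?lren_comp ?pren_comp. Qed.
Lemma ciren_ext a b (c : citem NS Fs) : agree a b (cinoms c) -> ciren a c = ciren b c.
Proof.
case: c => /= [e p|B|//|e p|H e P p] Hg.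
- by rewrite (eren_ext (agree_catl Hg)) (cren_ext (agree_catr Hg)).
- by rewrite (ren_ext Hg).
- by rewrite (eren_ext (agree_catl Hg)) (cren_ext (agree_catr Hg)).
rewrite (lren_ext (agree_catl Hg)); have {}Hg := agree_catr Hg.
rewrite (eren_ext (agree_catl Hg)); have {}Hg := agree_catr Hg.
by rewrite (pren_ext (agree_catl Hg)) (cren_ext (agree_catr Hg)).
Qed.
Lemma ciren_id (c : citem NS Fs) : ciren idn c = c.
Proof. case: c => *; by rewrite /= ?ren_id ?eren_id ?cren_id ?lren_id ?pren_id. Qed.
Lemma cinoms_ren a (c : citem NS Fs) : cinoms (ciren a c) = map (napp a) (cinoms c).
Proof. case: c => *; by rewrite /= ?tnoms_ren ?enoms_ren ?cnoms_ren ?lnoms_ren ?pnoms_ren ?map_cat. Qed.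

Lemma cisren_comp a b (cs : seq (citem NS Fs)) : map (ciren a) (map (ciren b) cs) = map (ciren (cmp a b)) cs.
Proof. rewrite -map_comp; apply: eq_map => c; exact: ciren_comp. Qed.
Lemma cisren_ext a b (cs : seq (citem NS Fs)) : agree a b (flatten (map (@cinoms NS Fs) cs)) -> map (ciren a) cs = map (ciren b) cs.
Proof.
elim: cs => //= c cs IH H; rewrite (ciren_ext (agree_catl H)) IH //; exact: agree_catr H.
Qed.
Lemma cisren_id (cs : seq (citem NS Fs)) : map (ciren idn) cs = cs.
Proof. by rewrite (eq_map (@ciren_id)) map_id. Qed.
Lemma cisnoms_ren a (cs : seq (citem NS Fs)) : flatten (map (@cinoms NS Fs) (map (ciren a) cs)) = map (napp a) (flatten (map (@cinoms NS Fs) cs)).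
Proof. elim: cs => //= c cs ->; by rewrite cinoms_ren map_cat. Qed.

Lemma diren_comp a b (c : ditem NS Fs) : diren a (diren b c) = diren (cmp a b) c.
Proof.
case: c => [e R|//|e R|e cs R|H e B F0 P R] /=; rewrite ?ren_comp ?eren_comp ?qren_comp ?lren_comp ?pren_comp ?cisren_comp //.
by case: F0 => //= l; rewrite lren_comp.
Qed.
Lemma diren_ext a b (c : ditem NS Fs) : agree a b (dinoms c) -> diren a c = diren b c.
Proof.
case: c => /= [e R|//|e R|e cs R|H e B F0 P R] Hg.
- by rewrite (eren_ext (agree_catl Hg)) (qren_ext (agree_catr Hg)).
- by rewrite (eren_ext (agree_catl Hg)) (qren_ext (agree_catr Hg)).
- rewrite (eren_ext (agree_catl Hg)); have {}Hg := agree_catr Hg.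
  by rewrite (cisren_ext (agree_catl Hg)) (qren_ext (agree_catr Hg)).
rewrite (lren_ext (agree_catl Hg)); have {}Hg := agree_catr Hg.
rewrite (eren_ext (agree_catl Hg)); have {}Hg := agree_catr Hg.
have H1 := agree_catl Hg; have {}Hg := agree_catr Hg.
rewrite (pren_ext (agree_catl Hg)) (qren_ext (agree_catr Hg)).
by case: F0 H1 => //= l H1; rewrite (lren_ext H1).
Qed.
Lemma diren_id (c : ditem NS Fs) : diren idn c = c.
Proof.
case: c => [e R|//|e R|e cs R|H e B F0 P R] /=; rewrite ?ren_id ?eren_id ?qren_id ?lren_id ?pren_id ?cisren_id //.
by case: F0 => //= l; rewrite lren_id.
Qed.
Lemma dinoms_ren a (c : ditem NS Fs) : dinoms (diren a c) = map (napp a) (dinoms c).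
Proof.
case: c => [e R|//|e R|e cs R|H e B F0 P R] /=;
  rewrite ?enoms_ren ?qnoms_ren ?lnoms_ren ?pnoms_ren ?cisnoms_ren ?map_cat //.
by case: F0 => //= l; rewrite lnoms_ren.
Qed.

Lemma disren_comp a b (cs : seq (ditem NS Fs)) : map (diren a) (map (diren b) cs) = map (diren (cmp a b)) cs.
Proof. rewrite -map_comp; apply: eq_map => c; exact: diren_comp. Qed.
Lemma disren_ext a b (cs : seq (ditem NS Fs)) : agree a b (flatten (map (@dinoms NS Fs) cs)) -> map (diren a) cs = map (diren b) cs.
Proof.
elim: cs => //= c cs IH H; rewrite (diren_ext (agree_catl H)) IH //; exact: agree_catr H.
Qed.
Lemma disren_id (cs : seq (ditem NS Fs)) : map (diren idn) cs = cs.
Proof. by rewrite (eq_map (@diren_id)) map_id. Qed.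
Lemma disnoms_ren a (cs : seq (ditem NS Fs)) : flatten (map (@dinoms NS Fs) (map (diren a) cs)) = map (napp a) (flatten (map (@dinoms NS Fs) cs)).
Proof. elim: cs => //= c cs ->; by rewrite dinoms_ren map_cat. Qed.

Lemma fren_comp a b (fs : seq (NS * nat)) : fren a (fren b fs) = fren (cmp a b) fs.
Proof. by rewrite /fren -map_comp. Qed.
Lemma fren_ext a b (fs : seq (NS * nat)) : agree a b fs -> fren a fs = fren b fs.
Proof. move=> H; rewrite /fren; apply/eq_in_map => p Hp; by rewrite H. Qed.
Lemma fren_id (fs : seq (NS * nat)) : fren idn fs = fs.
Proof. by rewrite /fren; elim: fs => //= [[s n] l] ->. Qed.

Lemma sren_comp a b (t : state NS Fs) : sren a (sren b t) = sren (cmp a b) t.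
Proof. case: t => * /=; by rewrite ?lren_comp ?fren_comp ?disren_comp. Qed.
Lemma sren_ext a b (t : state NS Fs) : agree a b (snoms t) -> sren a t = sren b t.
Proof.
rewrite /snoms; case: t => [F F' f Sk|G g|G g] /= H.
- have H1 := agree_catr H; have {}H := agree_catl H.
  rewrite (fren_ext H1) (lren_ext (agree_catl H)); have {}H := agree_catr H.
  by rewrite (lren_ext (agree_catl H)) (disren_ext (agree_catr H)).
- by rewrite (lren_ext (agree_catl H)) (fren_ext (agree_catr H)).
- by rewrite (lren_ext (agree_catl H)) (fren_ext (agree_catr H)).
Qed.
Lemma sren_id (t : state NS Fs) : sren idn t = t.
Proof. case: t => * /=; by rewrite ?lren_id ?fren_id ?disren_id. Qed.
Lemma snoms_ren a (t : state NS Fs) : snoms (sren a t) = map (napp a) (snoms t).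
Proof.
rewrite /snoms; case: t => * /=; by rewrite ?lnoms_ren ?disnoms_ren !map_cat.
Qed.
End StructRen.

Section Rel.
Variables (NS : eqType) (Fs : Type) (D : data_algebra NS Fs).
Local Notation term := (term NS Fs).
Local Notation aeq := (aeq D).
Definition krel K (p q : K * term) := p.1 = q.1 /\ aeq p.2 q.2.

Lemma krel_refl K (p : K * term) : krel p p.
Proof. split => //; exact: aeq_refl. Qed.
Lemma krel_sym K (p q : K * term) : krel p q -> krel q p.
Proof. case=> ? ?; split => //; exact: aeq_sym. Qed.
Lemma krel_trans K (p q r : K * term) : krel p q -> krel q r -> krel p r.
Proof. case=> H1 H2 [H3 H4]; split; [congruence|exact: aeq_trans H2 H4]. Qed.

Lemma aeq_trans' (x y z : term) : aeq x y -> aeq y z -> aeq x z. Proof. exact: aeq_trans. Qed.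
Lemma aeq_sym' (x y : term) : aeq x y -> aeq y x. Proof. exact: aeq_sym. Qed.

Lemma lrel_refl l : lrel D l l. Proof. apply: mrel_refl; exact: aeq_refl. Qed.
Lemma lrel_sym l1 l2 : lrel D l1 l2 -> lrel D l2 l1. Proof. apply: mrel_sym; exact: aeq_sym. Qed.
Lemma lrel_trans l1 l2 l3 : lrel D l1 l2 -> lrel D l2 l3 -> lrel D l1 l3.
Proof. apply: mrel_trans; exact: aeq_trans. Qed.

Lemma star_refl (l : seq (NS * term)) : mrel (@krel NS) l l. Proof. apply: mrel_refl; exact: krel_refl. Qed.
Lemma star_sym (l1 l2 : seq (NS * term)) : mrel (@krel NS) l1 l2 -> mrel (@krel NS) l2 l1.
Proof. apply: mrel_sym; exact: krel_sym. Qed.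
Lemma star_trans (l1 l2 l3 : seq (NS * term)) : mrel (@krel NS) l1 l2 -> mrel (@krel NS) l2 l3 -> mrel (@krel NS) l1 l3.
Proof. apply: mrel_trans; exact: krel_trans. Qed.

Lemma patrel_refl P : patrel D P P.
Proof. split; [exact: lrel_refl|exact: lrel_refl|exact: lrel_refl|exact: star_refl]. Qed.
Lemma patrel_sym P1 P2 : patrel D P1 P2 -> patrel D P2 P1.
Proof. case=> *; split; [exact: lrel_sym|exact: lrel_sym|exact: lrel_sym|exact: star_sym]. Qed.
Lemma patrel_trans P1 P2 P3 : patrel D P1 P2 -> patrel D P2 P3 -> patrel D P1 P3.
Proof.
case=> ? ? ? ? [? ? ? ?]; split; eauto using lrel_trans, star_trans.
Qed.

Lemma condrel_refl c : condrel D c c.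
Proof. elim: c => //= *; try split; auto using patrel_refl, aeq_refl. Qed.
Lemma condrel_sym c1 c2 : condrel D c1 c2 -> condrel D c2 c1.
Proof.
elim: c1 c2 => [|B|c IH|a IHa b IHb|P c IH] [|B2|c2|a2 b2|P2 c2] //=.
- exact: aeq_sym.
- exact: IH.
- by case=> /IHa ? /IHb ?.
- by case=> /patrel_sym ? /IH ?.
Qed.
Lemma condrel_trans c1 c2 c3 : condrel D c1 c2 -> condrel D c2 c3 -> condrel D c1 c3.
Proof.
elim: c1 c2 c3 => [|B|c IH|a IHa b IHb|P c IH] [|B2|c2|a2 b2|P2 c2] [|B3|c3|a3 b3|P3 c3] //=.
- exact: aeq_trans.
- exact: IH.
- by case=> H1 H2 [H3 H4]; split; [exact: IHa H3|exact: IHb H4].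
- by case=> H1 H2 [H3 H4]; split; [exact: patrel_trans H3|exact: IH H4].
Qed.

Lemma dmlrel_refl c : dmlrel D c c.
Proof. elim: c => //= *; try split; auto using patrel_refl, aeq_refl, condrel_refl. Qed.
Lemma dmlrel_sym c1 c2 : dmlrel D c1 c2 -> dmlrel D c2 c1.
Proof.
elim: c1 c2 => [||B|a IHa b IHb|P c IH|P c IH] [||B2|a2 b2|P2 c2|P2 c2] //=.
- exact: aeq_sym.
- by case=> /IHa ? /IHb ?.
- by case=> /condrel_sym ? /IH ?.
- by case=> /patrel_sym ? /IH ?.
Qed.
Lemma dmlrel_trans c1 c2 c3 : dmlrel D c1 c2 -> dmlrel D c2 c3 -> dmlrel D c1 c3.
Proof.
elim: c1 c2 c3 => [||B|a IHa b IHb|P c IH|P c IH] [||B2|a2 b2|P2 c2|P2 c2] [||B3|a3 b3|P3 c3|P3 c3] //=.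
- exact: aeq_trans.
- by case=> H1 H2 [H3 H4]; split; [exact: IHa H3|exact: IHb H4].
- by case=> H1 H2 [H3 H4]; split; [exact: condrel_trans H3|exact: IH H4].
- by case=> H1 H2 [H3 H4]; split; [exact: patrel_trans H3|exact: IH H4].
Qed.

Lemma envrel_refl e : envrel D e e. Proof. apply: F2_refl; exact: krel_refl. Qed.
Lemma envrel_sym e1 e2 : envrel D e1 e2 -> envrel D e2 e1. Proof. apply: F2_sym; exact: krel_sym. Qed.
Lemma envrel_trans e1 e2 e3 : envrel D e1 e2 -> envrel D e2 e3 -> envrel D e1 e3.
Proof. apply: F2_trans; exact: krel_trans. Qed.

Lemma cirel_refl c : cirel D c c.
Proof.
case: c => *; rewrite /=; try split;
  auto using envrel_refl, condrel_refl, aeq_refl, lrel_refl, patrel_refl.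
Qed.
Lemma cirel_sym c1 c2 : cirel D c1 c2 -> cirel D c2 c1.
Proof.
move: c1 c2 => [e p|B||e p|H e P p] [e' p'|B'||e' p'|H' e' P' p'] //=.
- by case=> /envrel_sym ? /condrel_sym ?.
- exact: aeq_sym.
- by case=> /envrel_sym ? /condrel_sym ?.
- by case=> /lrel_sym ? /envrel_sym ? /patrel_sym ? /condrel_sym ?.
Qed.
Lemma cirel_trans c1 c2 c3 : cirel D c1 c2 -> cirel D c2 c3 -> cirel D c1 c3.
Proof.
move: c1 c2 c3 => [e p|B||e p|H e P p] [e' p'|B'||e' p'|H' e' P' p'] [e3 p3|B3||e3 p3|H3 e3 P3 p3] //=.
- by case=> ? ? [? ?]; split; [apply: envrel_trans|apply: condrel_trans]; eauto.
- exact: aeq_trans.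
- by case=> ? ? [? ?]; split; [apply: envrel_trans|apply: condrel_trans]; eauto.
- case=> ? ? ? ? [? ? ? ?]; split;
  [apply: lrel_trans|apply: envrel_trans|apply: patrel_trans|apply: condrel_trans]; eauto.
Qed.

Definition f0rel (F01 F02 : option (seq term)) :=
  match F01, F02 with
  | None, None => True
  | Some l1, Some l2 => lrel D l1 l2
  | _, _ => False
  end.

Lemma direl_refl c : direl D c c.
Proof.
case: c => [e R||e R|e cs R|H e B F0 P R] /=; try split;
  auto using envrel_refl, dmlrel_refl, lrel_refl, patrel_refl.
- apply: F2_refl; exact: cirel_refl.
- by case: F0 => //= l; exact: lrel_refl.
Qed.
Lemma direl_sym c1 c2 : direl D c1 c2 -> direl D c2 c1.
Proof.
move: c1 c2 => [e R||e R|e cs R|H e B F0 P R] [e' R'||e' R'|e' cs' R'|H' e' B' F0' P' R'] //=.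
- by case=> /envrel_sym ? /dmlrel_sym ?.
- by case=> /envrel_sym ? /dmlrel_sym ?.
- case=> /envrel_sym ? ? /dmlrel_sym ?; split => //; apply: F2_sym; eauto; exact: cirel_sym.
- case=> /lrel_sym ? /envrel_sym ? -> HF [/patrel_sym ? /dmlrel_sym ?]; split => //.
  by case: F0 F0' HF => [l|] [l'|] //=; exact: lrel_sym.
Qed.
Lemma direl_trans c1 c2 c3 : direl D c1 c2 -> direl D c2 c3 -> direl D c1 c3.
Proof.
move: c1 c2 c3 => [e R||e R|e cs R|H e B F0 P R] [e' R'||e' R'|e' cs' R'|H' e' B' F0' P' R'] [e3 R3||e3 R3|e3 cs3 R3|H3 e3 B3 F03 P3 R3] //=.
- by case=> ? ? [? ?]; split; [apply: envrel_trans|apply: dmlrel_trans]; eauto.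
- by case=> ? ? [? ?]; split; [apply: envrel_trans|apply: dmlrel_trans]; eauto.
- case=> ? ? ? [? ? ?]; split; [apply: envrel_trans| |apply: dmlrel_trans]; eauto.
  apply: F2_trans; eauto; exact: cirel_trans.
- case=> ? ? -> HF [? ?] [? ? -> HF' [? ?]]; split => //;
  [apply: lrel_trans|apply: envrel_trans| |split; [apply: patrel_trans|apply: dmlrel_trans]]; eauto.
  by case: F0 F0' F03 HF HF' => [l|] [l'|] [l''|] //=; exact: lrel_trans.
Qed.

Lemma steq_refl t : steq D t t.
Proof.
case: t => *; rewrite /=; try split; auto using lrel_refl, Permutation_refl.
apply: F2_refl; exact: direl_refl.
Qed.
Lemma steq_sym t1 t2 : steq D t1 t2 -> steq D t2 t1.
Proof.
move: t1 t2 => [F F' f S|G g|G g] [F2 F2' f2 S2|G2 g2|G2 g2] //=.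
- case=> /lrel_sym ? /lrel_sym ? /Permutation_sym ? ?; split => //.
  apply: F2_sym; eauto; exact: direl_sym.
- by case=> /lrel_sym ? /Permutation_sym ?.
- by case=> /lrel_sym ? /Permutation_sym ?.
Qed.
Lemma steq_trans t1 t2 t3 : steq D t1 t2 -> steq D t2 t3 -> steq D t1 t3.
Proof.
move: t1 t2 t3 => [F F' f S|G g|G g] [F2 F2' f2 S2|G2 g2|G2 g2] [F3 F3' f3 S3|G3 g3|G3 g3] //=.
- case=> ? ? ? ? [? ? ? ?]; split; [apply: lrel_trans|apply: lrel_trans|apply: Permutation_trans|]; eauto.
  apply: F2_trans; eauto; exact: direl_trans.
- by case=> ? ? [? ?]; split; [apply: lrel_trans|apply: Permutation_trans]; eauto.
- by case=> ? ? [? ?]; split; [apply: lrel_trans|apply: Permutation_trans]; eauto.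
Qed.
End Rel.

Section RelRen.
Variables (NS : eqType) (Fs : Type) (D : data_algebra NS Fs).
Local Notation term := (term NS Fs).
Local Notation aeq := (aeq D).
Variable g : NS -> nat -> nat.
Hypothesis Hg : forall s, injective (g s).

Lemma aeq_renP (t u : term) : aeq t u -> aeq (ren g t) (ren g u).
Proof. exact: (aeq_ren D Hg t u).2. Qed.

Lemma lrel_ren l1 l2 : lrel D l1 l2 -> lrel D (lren g l1) (lren g l2).
Proof. apply: mrel_map; exact: aeq_renP. Qed.
Lemma krel_ren K (p q : K * term) : krel D p q -> krel D (p.1, ren g p.2) (q.1, ren g q.2).
Proof. by case=> /= -> /aeq_renP. Qed.
Lemma patrel_ren P1 P2 : patrel D P1 P2 -> patrel D (pren g P1) (pren g P2).
Proof.
case=> ? ? ? ?; split; rewrite /=; try exact: lrel_ren.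
apply: mrel_map; last eassumption; exact: krel_ren.
Qed.
Lemma condrel_ren c1 c2 : condrel D c1 c2 -> condrel D (cren g c1) (cren g c2).
Proof.
elim: c1 c2 => [|B|c IH|a IHa b IHb|P c IH] [|B2|c2|a2 b2|P2 c2] //=.
- exact: aeq_renP.
- exact: IH.
- by case=> /IHa ? /IHb ?.
- by case=> /patrel_ren ? /IH ?.
Qed.
Lemma dmlrel_ren c1 c2 : dmlrel D c1 c2 -> dmlrel D (qren g c1) (qren g c2).
Proof.
elim: c1 c2 => [||B|a IHa b IHb|P c IH|P c IH] [||B2|a2 b2|P2 c2|P2 c2] //=.
- exact: aeq_renP.
- by case=> /IHa ? /IHb ?.
- by case=> /condrel_ren ? /IH ?.
- by case=> /patrel_ren ? /IH ?.
Qed.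
Lemma envrel_ren e1 e2 : envrel D e1 e2 -> envrel D (eren g e1) (eren g e2).
Proof. apply: F2_map; exact: krel_ren. Qed.
Lemma cirel_ren c1 c2 : cirel D c1 c2 -> cirel D (ciren g c1) (ciren g c2).
Proof.
move: c1 c2 => [e p|B||e p|H e P p] [e' p'|B'||e' p'|H' e' P' p'] //=.
- by case=> /envrel_ren ? /condrel_ren ?.
- exact: aeq_renP.
- by case=> /envrel_ren ? /condrel_ren ?.
- by case=> /lrel_ren ? /envrel_ren ? /patrel_ren ? /condrel_ren ?.
Qed.
Lemma direl_ren c1 c2 : direl D c1 c2 -> direl D (diren g c1) (diren g c2).
Proof.
move: c1 c2 => [e R||e R|e cs R|H e B F0 P R] [e' R'||e' R'|e' cs' R'|H' e' B' F0' P' R'] //=.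
- by case=> /envrel_ren ? /dmlrel_ren ?.
- by case=> /envrel_ren ? /dmlrel_ren ?.
- case=> /envrel_ren ? ? /dmlrel_ren ?; split => //; apply: F2_map; eauto; exact: cirel_ren.
- case=> /lrel_ren ? /envrel_ren ? -> HF [/patrel_ren ? /dmlrel_ren ?]; split => //.
  by case: F0 F0' HF => [l|] [l'|] //=; exact: lrel_ren.
Qed.
Lemma steq_ren t1 t2 : steq D t1 t2 -> steq D (sren g t1) (sren g t2).
Proof.
move: t1 t2 => [F F' f S|G g'|G g'] [F2 F2' f2 S2|G2 g2|G2 g2] //=.
- case=> /lrel_ren ? /lrel_ren ? /(Permutation_map (napp g)) ? ?; split => //.
  apply: F2_map; eauto; exact: direl_ren.
- by case=> /lrel_ren ? /(Permutation_map (napp g)) ?.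
- by case=> /lrel_ren ? /(Permutation_map (napp g)) ?.
Qed.
End RelRen.

Arguments pnoms : simpl never.
Arguments lnoms : simpl never.
Arguments enoms : simpl never.
Lemma eqi_cat (T : eqType) (X1 X2 Y1 Y2 : seq T) : X1 =i Y1 -> X2 =i Y2 -> X1 ++ X2 =i Y1 ++ Y2.
Proof. by move=> H1 H2 x; rewrite !mem_cat H1 H2. Qed.
Section RelNoms.
Variables (NS : eqType) (Fs : Type) (D : data_algebra NS Fs).
Local Notation term := (term NS Fs).
Local Notation aeq := (aeq D).

Lemma lrel_noms l1 l2 : lrel D l1 l2 -> lnoms l1 =i lnoms l2.
Proof. apply: mrel_flatten_mem; exact: aeq_noms. Qed.
Lemma krel_noms K (p q : K * term) : krel D p q -> tnoms p.2 =i tnoms q.2.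
Proof. case=> _; exact: aeq_noms. Qed.
Lemma patrel_noms P1 P2 : patrel D P1 P2 -> pnoms P1 =i pnoms P2.
Proof.
case=> H1 H2 H3 H4 x; rewrite /pnoms !mem_cat (lrel_noms H1) (lrel_noms H2) (lrel_noms H3).
congr (_ || (_ || (_ || _))); apply: mrel_flatten_mem H4 x; exact: krel_noms.
Qed.
Lemma condrel_noms c1 c2 : condrel D c1 c2 -> cnoms c1 =i cnoms c2.
Proof.
elim: c1 c2 => [|B|c IH|a IHa b IHb|P c IH] [|B2|c2|a2 b2|P2 c2] //=.
- exact: aeq_noms.
- exact: IH.
- by case=> /IHa H1 /IHb H2 ; exact: eqi_cat.
- by case=> /patrel_noms H1 /IH H2 ; exact: eqi_cat.
Qed.
Lemma dmlrel_noms c1 c2 : dmlrel D c1 c2 -> qnoms c1 =i qnoms c2.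
Proof.
elim: c1 c2 => [||B|a IHa b IHb|P c IH|P c IH] [||B2|a2 b2|P2 c2|P2 c2] //=.
- exact: aeq_noms.
- by case=> /IHa H1 /IHb H2 ; exact: eqi_cat.
- by case=> /condrel_noms H1 /IH H2 ; exact: eqi_cat.
- by case=> /patrel_noms H1 /IH H2 ; exact: eqi_cat.
Qed.
Lemma envrel_noms e1 e2 : envrel D e1 e2 -> enoms e1 =i enoms e2.
Proof. apply: F2_flatten_mem; exact: krel_noms. Qed.
Lemma cirel_noms c1 c2 : cirel D c1 c2 -> cinoms c1 =i cinoms c2.
Proof.
move: c1 c2 => [e p|B||e p|H e P p] [e' p'|B'||e' p'|H' e' P' p'] //=.
- by case=> /envrel_noms H1 /condrel_noms H2 ; exact: eqi_cat.
- exact: aeq_noms.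
- by case=> /envrel_noms H1 /condrel_noms H2 ; exact: eqi_cat.
- by case=> /lrel_noms H0 /envrel_noms H1 /patrel_noms H2 /condrel_noms H3; apply: eqi_cat => //; apply: eqi_cat => //; exact: eqi_cat.
Qed.
Lemma direl_noms c1 c2 : direl D c1 c2 -> dinoms c1 =i dinoms c2.
Proof.
move: c1 c2 => [e R||e R|e cs R|H e B F0 P R] [e' R'||e' R'|e' cs' R'|H' e' B' F0' P' R'] //=.
- by case=> /envrel_noms H1 /dmlrel_noms H2 ; exact: eqi_cat.
- by case=> /envrel_noms H1 /dmlrel_noms H2 ; exact: eqi_cat.
- case=> /envrel_noms H1 H /dmlrel_noms H2; apply: eqi_cat => //; apply: eqi_cat => //.
  exact: (F2_flatten_mem cirel_noms H).
- case=> /lrel_noms H0 /envrel_noms H1 _ HF [/patrel_noms H2 /dmlrel_noms H3].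
  apply: eqi_cat => //; apply: eqi_cat => //; apply: eqi_cat => //; last exact: eqi_cat.
  by case: F0 F0' HF => [l|] [l'|] //= /lrel_noms.
Qed.
Lemma perm_mem_eq (T : eqType) (l1 l2 : seq T) : Permutation l1 l2 -> l1 =i l2.
Proof.
elim=> [|x l l' _ IH|x y l|l l' l'' _ IH1 _ IH2] //= z.
- by rewrite !in_cons IH.
- by rewrite !in_cons orbCA.
- by rewrite IH1 IH2.
Qed.
Lemma steq_noms t1 t2 : steq D t1 t2 -> snoms t1 =i snoms t2.
Proof.
rewrite /snoms; move: t1 t2 => [F F' f S|G g'|G g'] [F2 F2' f2 S2|G2 g2|G2 g2] //=.
- case=> /lrel_noms H1 /lrel_noms H2 /perm_mem_eq H3 H; apply: eqi_cat => //; apply: eqi_cat => //; apply: eqi_cat => //.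
  exact: (F2_flatten_mem direl_noms H).
- by case=> /lrel_noms H1 /perm_mem_eq H2 ; exact: eqi_cat.
- by case=> /lrel_noms H1 /perm_mem_eq H2 ; exact: eqi_cat.
Qed.
End RelNoms.

Section Inj.
Variable NS : eqType.
Definition injon (X : seq (NS * nat)) (f : NS -> nat -> nat) :=
  forall s n m, (s, n) \in X -> (s, m) \in X -> f s n = f s m -> n = m.

Lemma foldr_max_ub (l : seq nat) x : x \in l -> x <= foldr maxn 0 l.
Proof.
elim: l => //= y l IH; rewrite in_cons => /orP [/eqP ->|H]; first exact: leq_maxl.
exact: leq_trans (IH H) (leq_maxr _ _).
Qed.

Lemma ext_inj (X : seq (NS * nat)) f : injon X f ->
  exists g : NS -> nat -> nat, (forall s, injective (g s)) /\ agree g f X.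
Proof.
move=> Hi.
pose M := (foldr maxn 0 (map (fun p => f p.1 p.2) X)).+1.
have HM : forall s n, (s, n) \in X -> f s n < M.
  move=> s n H; rewrite ltnS; apply: foldr_max_ub.
  exact: (map_f (fun p => f p.1 p.2) H).
exists (fun s n => if (s, n) \in X then f s n else n + M); split.
- move=> s n m /=; case: ifP => Hn; case: ifP => Hm.
  + exact: Hi.
  + move=> E; have := HM _ _ Hn; by rewrite E ltnNge leq_addl.
  + move=> E; have := HM _ _ Hm; by rewrite -E ltnNge leq_addl.
  + by move/eqP; rewrite eqn_add2r => /eqP.
- by case=> s n /= ->.
Qed.

Lemma inv_inj (X : seq (NS * nat)) f : injon X f ->
  exists h : NS -> nat -> nat, (forall s, injective (h s)) /\ forall s n, (s, n) \in X -> h s (f s n) = n.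
Proof.
move=> Hi.
pose h0 s k := head k [seq p.2 | p <- X & (p.1 == s) && (f s p.2 == k)].
have Hh0 : forall s n, (s, n) \in X -> h0 s (f s n) = n.
  move=> s n Hn; rewrite /h0.
  have : (s, n) \in [seq p <- X | (p.1 == s) && (f s p.2 == f s n)] by rewrite mem_filter /= !eqxx.
  case E: [seq p <- X | _] => [|q L] //= _.
  have : q \in [seq p <- X | (p.1 == s) && (f s p.2 == f s n)] by rewrite E mem_head.
  rewrite mem_filter => /andP [/andP [/eqP Hs /eqP Hf] Hq].
  apply: (Hi s) => //; by case: q Hs Hf Hq E => /= s' m ->.
have [h [Hh Ha]] : exists h : NS -> nat -> nat, (forall s, injective (h s)) /\ agree h h0 (map (napp f) X).
  apply: ext_inj => s k1 k2 /mapP [[s1 n1] H1 E1] /mapP [[s2 n2] H2 E2].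
  rewrite /napp /= in E1 E2; case: E1 => ? ?; case: E2 => ? ?; subst.
  by rewrite !Hh0 // => ->.
exists h; split => // s n Hn.
rewrite (Ha (s, f s n)) ?Hh0 //.
exact: (map_f (napp f) Hn).
Qed.
End Inj.

Section NomEq.
Variables (NS : eqType) (Fs : Type) (D : data_algebra NS Fs).

Lemma nom_equiv_of t1 t2 a : injon (snoms t1) a -> steq D (sren a t1) t2 -> nom_equiv D t1 t2.
Proof.
move=> Hi Hs; exists a; split => //.
- move=> s n Hn; rewrite -(steq_noms Hs) snoms_ren; exact: (map_f (napp a) Hn).
- move=> s k; rewrite -(steq_noms Hs) snoms_ren => /mapP [[s' n] Hn E].
  rewrite /napp /= in E; case: E => ? ?; subst; by exists n.
Qed.

Lemma nom_equiv_inv t1 t2 : nom_equiv D t1 t2 -> exists2 a, injon (snoms t1) a & steq D (sren a t1) t2.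
Proof. by case=> a [Hi _ _ Hs]; exists a. Qed.

Lemma nom_refl t : nom_equiv D t t.
Proof.
apply: (@nom_equiv_of _ _ idn) => [s n m _ _ //|]; rewrite sren_id; exact: steq_refl.
Qed.

Lemma nom_sym t1 t2 : nom_equiv D t1 t2 -> nom_equiv D t2 t1.
Proof.
case/nom_equiv_inv => a Hi Hs.
have [h [Hh Hha]] := inv_inj Hi.
apply: (@nom_equiv_of _ _ h) => [s n m _ _|]; first exact: Hh.
apply: steq_sym.
have := steq_ren Hh Hs; rewrite sren_comp (@sren_ext _ _ (cmp h a) idn) ?sren_id //.
by case=> s n Hn; rewrite /cmp /= Hha.
Qed.

Lemma nom_trans t1 t2 t3 : nom_equiv D t1 t2 -> nom_equiv D t2 t3 -> nom_equiv D t1 t3.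
Proof.
case/nom_equiv_inv => a1 Hi1 Hs1 /nom_equiv_inv [a2 Hi2 Hs2].
have [b [Hb Hba]] := ext_inj Hi2.
apply: (@nom_equiv_of _ _ (cmp b a1)).
  move=> s n m Hn Hm; rewrite /cmp => /Hb; exact: Hi1.
apply: steq_trans Hs2.
have := steq_ren Hb Hs1; rewrite sren_comp (@sren_ext _ _ b a2 t2) //.
Qed.
End NomEq.

Arguments lren : simpl never.
Arguments eren : simpl never.
Arguments pren : simpl never.
Arguments fren : simpl never.
Arguments kren : simpl never.
Arguments inst : simpl never.
Arguments extend : simpl never.
Arguments bground : simpl never.
Arguments upsilon : simpl never.
Arguments newvars : simpl never.

Section StepRen.
Variables (NS : eqType) (Fs : Type) (D : data_algebra NS Fs).
Local Notation term := (term NS Fs).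
Variable g : NS -> nat -> nat.
Hypothesis Hg : forall s, injective (g s).

Lemma lookup_ren (e : env NS Fs) x : lookup (eren g e) x = ren g (lookup e x).
Proof. elim: e => //= [[k t] e IH] /=; rewrite /eren /= -/(eren g e); by case: ifP. Qed.

Lemma subst_lookup_ren (e : env NS Fs) t : subst (lookup (eren g e)) (ren g t) = ren g (subst (lookup e) t).
Proof. symmetry; apply: subst_ren => x; exact: lookup_ren. Qed.

Lemma inst_ren (e : env NS Fs) l : lren g (inst e l) = inst (eren g e) (lren g l).
Proof. rewrite /inst /lren -!map_comp; apply: eq_map => t /=; by rewrite subst_lookup_ren. Qed.

Lemma pvars_ren (P : pattern NS Fs) : pvars (pren g P) = pvars P.
Proof.
case: P => b q z st; rewrite /pvars /pren /= -!lren_cat /lren /kren -!map_comp.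
by congr (flatten _ ++ flatten _); apply: eq_map => t /=; rewrite tvars_ren.
Qed.

Lemma fst_eren (e : env NS Fs) : map fst (eren g e) = map fst e.
Proof. by rewrite /eren -map_comp. Qed.

Lemma newvars_ren (P : pattern NS Fs) e : newvars (pren g P) (eren g e) = newvars P e.
Proof. by rewrite /newvars pvars_ren fst_eren. Qed.

Lemma extend_ren (e : env NS Fs) P b :
  eren g (extend e P b) = extend (eren g e) (pren g P) (fun w => ren g (b w)).
Proof. by rewrite /extend newvars_ren /eren map_cat -map_comp. Qed.

Lemma bground_ren (e : env NS Fs) P b :
  bground (eren g e) (pren g P) (fun w => ren g (b w)) = bground e P b.
Proof. rewrite /bground newvars_ren; apply: eq_all => w; by rewrite /ground tvars_ren. Qed.

Lemma deq_renP (t u : term) : deq D t u -> deq D (ren g t) (ren g u).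
Proof. exact: (deq_ren D Hg t u).2. Qed.

Lemma meq_ren l1 l2 : meq D l1 l2 -> meq D (lren g l1) (lren g l2).
Proof. apply: mrel_map; exact: deq_renP. Qed.

Lemma fst_fren (fs : seq (NS * nat)) : map fst (fren g fs) = map fst fs.
Proof. by rewrite /fren -map_comp. Qed.
Lemma fst_kren K (l : seq (K * term)) : map fst (kren g l) = map fst l.
Proof. by rewrite /kren -map_comp. Qed.

Lemma fmatch_ren (e : env NS Fs) Ps fs : fmatch D e Ps fs -> fmatch D (eren g e) (kren g Ps) (fren g fs).
Proof.
case=> H1 H2; split; first by rewrite fst_fren fst_kren.
apply: F2_map H2 => p q /= H; rewrite subst_lookup_ren; exact: (deq_renP H).
Qed.

Lemma p_bang_ren (P : pattern NS Fs) : p_bang (pren g P) = lren g (p_bang P). Proof. by []. Qed.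
Lemma p_q_ren (P : pattern NS Fs) : p_q (pren g P) = lren g (p_q P). Proof. by []. Qed.
Lemma p_0_ren (P : pattern NS Fs) : p_0 (pren g P) = lren g (p_0 P). Proof. by []. Qed.
Lemma p_star_ren (P : pattern NS Fs) : p_star (pren g P) = kren g (p_star P). Proof. by []. Qed.

Lemma matches_ex_ren H (e : env NS Fs) P : matches_ex D H e P -> matches_ex D (lren g H) (eren g e) (pren g P).
Proof.
case=> b [H' [Hb Hm]]; exists (fun w => ren g (b w)), (lren g H'); split; first by rewrite bground_ren.
by have := meq_ren Hm; rewrite !lren_cat inst_ren extend_ren lren_cat.
Qed.

Lemma matches_from_ren H (e : env NS Fs) P : matches_from D H e P -> matches_from D (lren g H) (eren g e) (pren g P).
Proof.
case=> b [H' [Hb Hm]]; exists (fun w => ren g (b w)), (lren g H'); split; first by rewrite bground_ren.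
by have := meq_ren Hm; rewrite !lren_cat inst_ren extend_ren !lren_cat.
Qed.
End StepRen.

Section StepRen2.
Variables (NS : eqType) (Fs : Type) (D : data_algebra NS Fs).
Local Notation term := (term NS Fs).
Variable g : NS -> nat -> nat.
Hypothesis Hg : forall s, injective (g s).

Lemma ren_back_agree (X : seq (NS * nat)) :
  exists h, (forall s, injective (h s)) /\ agree (cmp h g) idn X.
Proof.
have Hi : injon X g by move=> s n m _ _; exact: Hg.
have [h [Hh Hhg]] := inv_inj Hi.
exists h; split => // [[s n]] Hn; by rewrite /cmp /= Hhg.
Qed.

Lemma nmatches_ex_ren H (e : env NS Fs) P : ~ matches_ex D H e P -> ~ matches_ex D (lren g H) (eren g e) (pren g P).
Proof.
move=> Hn Hm; apply: Hn.
have [h [Hh Ha]] := ren_back_agree (lnoms H ++ enoms e ++ pnoms P).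
have := matches_ex_ren Hh Hm; rewrite lren_comp eren_comp pren_comp.
rewrite (lren_ext (agree_catl Ha)) (eren_ext (agree_catl (agree_catr Ha))).
by rewrite (pren_ext (agree_catr (agree_catr Ha))) lren_id eren_id pren_id.
Qed.

Lemma nmatches_from_ren H (e : env NS Fs) P : ~ matches_from D H e P -> ~ matches_from D (lren g H) (eren g e) (pren g P).
Proof.
move=> Hn Hm; apply: Hn.
have [h [Hh Ha]] := ren_back_agree (lnoms H ++ enoms e ++ pnoms P).
have := matches_from_ren Hh Hm; rewrite lren_comp eren_comp pren_comp.
rewrite (lren_ext (agree_catl Ha)) (eren_ext (agree_catl (agree_catr Ha))).
by rewrite (pren_ext (agree_catr (agree_catr Ha))) lren_id eren_id pren_id.
Qed.

Lemma perm_map_seq A B (f : A -> B) l1 l2 : Permutation l1 l2 -> Permutation (map f l1) (map f l2).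
Proof. elim=> /= [|x l l' _ IH|x y l|l l' l'' _ IH1 _ IH2]; by [constructor | apply: perm_swap | apply: Permutation_trans IH1 IH2]. Qed.

Lemma lren_rcons (l : seq term) x : lren g (rcons l x) = rcons (lren g l) (ren g x).
Proof. exact: map_rcons. Qed.
Lemma fren_cat (l1 l2 : seq (NS * nat)) : fren g (l1 ++ l2) = fren g l1 ++ fren g l2.
Proof. exact: map_cat. Qed.
Lemma upsilon_fren (fs : seq (NS * nat)) : (forall p, p \in fs -> g p.1 p.2.+1 = (g p.1 p.2).+1) ->
  fren g (upsilon fs) = upsilon (fren g fs).
Proof.
elim: fs => // [[s n] l] IH H; rewrite /fren /upsilon /= -/(fren g _) -/(upsilon _) -/(fren g _) -/(upsilon _).
by rewrite IH ?(H (s, n)) ?mem_head // => p Hp; apply: H; rewrite in_cons Hp orbT.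
Qed.

Lemma cstep_ren F cs cs' : cstep D F cs cs' -> cstep D (lren g F) (map (ciren g) cs) (map (ciren g) cs').
Proof.
case=> [Sk e|Sk e B|Sk e psi|Sk B|Sk e psi1 psi2|Sk e psi B HB|Sk e psi B HB|Sk e P psi
       |Sk H e P psi b H'' Hb Hm|Sk H e P psi B HB|Sk H e P psi B HB|Sk H e P psi Hn];
  rewrite ?map_rcons ?map_cat /=.
- exact: CS_False.
- rewrite -subst_lookup_ren; exact: CS_Bool.
- exact: CS_Neg.
- exact: CS_Not.
- exact: CS_Or.
- apply: CS_OrTrue; exact: deq_renP HB.
- apply: CS_OrFalse; exact: deq_renP HB.
- exact: CS_ExInit.
- rewrite lren_cat inst_ren extend_ren; apply: CS_ExMatch; first by rewrite bground_ren.
  by have := meq_ren Hg Hm; rewrite lren_cat inst_ren extend_ren lren_cat.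
- apply: CS_ExFalse; exact: deq_renP HB.
- apply: CS_ExTrue; exact: deq_renP HB.
- apply: CS_ExNoMatch; exact: nmatches_ex_ren.
Qed.

Lemma dstep_ren t t' : (forall s m, (s, m) \in ffacts t -> g s m.+1 = (g s m).+1) ->
  dstep D t t' -> dstep D (sren g t) (sren g t').
Proof.
move=> Hf H; case: H Hf => [F F' fF Sk|F F' fF Sk e|F F' fF Sk e|F F' fF Sk e f|F F' fF Sk e R1 R2
  |F F' fF Sk e R2|F F' fF Sk e R2|F F' fF Sk e phi R|F F' fF Sk e B R HB|F F' fF Sk e B R HB
  |F F' fF Sk e cs cs' R Hc|F F' fF Sk e P R|F F' fF Sk H e B P R b G H' K fs Hb HF HH Hp Hm
  |F F' fF Sk H e B F0 P R|F F' fF Sk H e B F0 P R|F F' fF Sk H e B P R Hn|F F' fF|F F' fF] Hf /=;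
  rewrite ?map_rcons ?map_cat /=.
- exact: DS_OkOk.
- exact: DS_Ok.
- exact: DS_Empty.
- rewrite lren_rcons -subst_lookup_ren; exact: DS_Fact.
- exact: DS_Plus.
- exact: DS_PlusOk.
- exact: DS_PlusTop.
- exact: DS_Imp.
- apply: DS_CondFalse; exact: deq_renP HB.
- apply: DS_CondTrue; exact: deq_renP HB.
- apply: DS_Cond; exact: cstep_ren.
- exact: DS_FromInit.
- have Hfs : forall p, p \in fs -> g p.1 p.2.+1 = (g p.1 p.2).+1.
    move=> [s m] Hin; apply: Hf; by rewrite (perm_mem_eq Hp) mem_cat Hin orbT.
  rewrite !lren_cat !inst_ren extend_ren !lren_cat fren_cat upsilon_fren //.
  apply: DS_FromMatch.
  + by rewrite bground_ren.
  + by have := meq_ren Hg HF; rewrite !lren_cat inst_ren extend_ren !lren_cat.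
  + by have := meq_ren Hg HH; rewrite !lren_cat inst_ren extend_ren !lren_cat.
  + by have := perm_map_seq (napp g) Hp; rewrite map_cat.
  + by have := fmatch_ren Hg Hm; rewrite extend_ren.
- rewrite !lren_cat; exact: DS_FromRestore.
- exact: DS_FromOk.
- rewrite (_ : map (diren g) (if B then rcons Sk DIOk else Sk) =
               if B then rcons (map (diren g) Sk) DIOk else map (diren g) Sk); last first.
    by case: (B); rewrite ?map_rcons.
  apply: DS_FromNoMatch; exact: nmatches_from_ren.
- rewrite lren_cat; exact: DS_New.
- rewrite lren_cat; exact: DS_Fail.
Qed.
End StepRen2.

Lemma mrel_map2 A A' (r : A -> A -> Prop) (r' : A' -> A' -> Prop) (f g : A -> A') l1 l2 :
  (forall x y, r x y -> r' (f x) (g y)) -> mrel r l1 l2 -> mrel r' (map f l1) (map g l2).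
Proof. move=> H [l Hp Hf]; exists (map g l); [exact: perm_map_seq | exact: F2_map Hf]. Qed.

Section StepRel.
Variables (NS : eqType) (Fs : Type) (D : data_algebra NS Fs).
Local Notation term := (term NS Fs).
Local Notation aeq := (aeq D).

Lemma lookup_rel (e1 e2 : env NS Fs) : envrel D e1 e2 -> forall x, aeq (lookup e1 x) (lookup e2 x).
Proof.
move=> H x; elim: H => [|p q l1 l2 [E1 E2] _ IH] /=; first exact: aeq_refl.
by rewrite E1; case: ifP.
Qed.

Lemma subst_rel (e1 e2 : env NS Fs) t u : envrel D e1 e2 -> aeq t u ->
  aeq (subst (lookup e1) t) (subst (lookup e2) u).
Proof. move=> He; apply: aeq_subst2; exact: lookup_rel. Qed.

Lemma inst_rel (e1 e2 : env NS Fs) l1 l2 : envrel D e1 e2 -> lrel D l1 l2 -> lrel D (inst e1 l1) (inst e2 l2).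
Proof. move=> He; apply: mrel_map2 => x y; exact: subst_rel. Qed.

Lemma fst_envrel (e1 e2 : env NS Fs) : envrel D e1 e2 -> map fst e1 = map fst e2.
Proof. by elim=> [|p q l1 l2 [E1 _] _ IH] //=; rewrite E1 IH. Qed.

Lemma pvars_rel P1 P2 : patrel D P1 P2 -> pvars P1 =i pvars P2.
Proof.
case=> H1 H2 H3 H4; rewrite /pvars; apply: eqi_cat.
- apply: mrel_flatten_mem (mrel_app H1 (mrel_app H2 H3)); exact: aeq_vars.
- apply: mrel_flatten_mem H4 => p q [_ E]; exact: aeq_vars E.
Qed.

Lemma newvars_rel (e1 e2 : env NS Fs) P1 P2 : envrel D e1 e2 -> patrel D P1 P2 -> newvars P1 e1 = newvars P2 e2.
Proof.
move=> He Hp; rewrite /newvars (fst_envrel He).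
apply/perm_sortP; [exact: leq_total|exact: leq_trans|exact: anti_leq|].
apply: uniq_perm; rewrite ?undup_uniq // => x.
by rewrite !mem_undup !mem_filter (pvars_rel Hp).
Qed.

Lemma extend_rel (e1 e2 : env NS Fs) P1 P2 b : envrel D e1 e2 -> patrel D P1 P2 ->
  envrel D (extend e1 P1 b) (extend e2 P2 b).
Proof.
move=> He Hp; rewrite /extend (newvars_rel He Hp); apply: List.Forall2_app => //.
apply: F2_refl; exact: krel_refl.
Qed.

Lemma bground_rel (e1 e2 : env NS Fs) P1 P2 b : envrel D e1 e2 -> patrel D P1 P2 ->
  bground e1 P1 b = bground e2 P2 b.
Proof. move=> He Hp; by rewrite /bground (newvars_rel He Hp). Qed.

Lemma lrel_meq l1 l2 : lrel D l1 l2 -> meq D l1 l2.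
Proof. apply: mrel_impl; exact: aeq_deq. Qed.
Lemma meq_sym l1 l2 : meq D l1 l2 -> meq D l2 l1.
Proof. apply: mrel_sym; exact: deq_sym. Qed.
Lemma meq_trans l1 l2 l3 : meq D l1 l2 -> meq D l2 l3 -> meq D l1 l3.
Proof. apply: mrel_trans; exact: deq_trans. Qed.

Lemma meq_transfer H1 H2 H' I1 I2 : lrel D H1 H2 -> lrel D I1 I2 -> meq D H1 (H' ++ I1) -> meq D H2 (H' ++ I2).
Proof.
move=> HH HI Hm; apply: meq_trans (meq_sym (lrel_meq HH)) _; apply: meq_trans Hm _.
apply: mrel_app; [apply: mrel_refl; exact: deq_refl | exact: lrel_meq].
Qed.

Lemma pat3_rel P1 P2 : patrel D P1 P2 -> lrel D (p_bang P1 ++ p_q P1 ++ p_0 P1) (p_bang P2 ++ p_q P2 ++ p_0 P2).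
Proof. case=> H1 H2 H3 _; apply: mrel_app => //; exact: mrel_app. Qed.
Lemma pat2_rel P1 P2 : patrel D P1 P2 -> lrel D (p_bang P1 ++ p_q P1) (p_bang P2 ++ p_q P2).
Proof. case=> H1 H2 H3 _; exact: mrel_app. Qed.

Lemma matches_ex_rel H1 H2 (e1 e2 : env NS Fs) P1 P2 : lrel D H1 H2 -> envrel D e1 e2 -> patrel D P1 P2 ->
  matches_ex D H1 e1 P1 -> matches_ex D H2 e2 P2.
Proof.
move=> HH He Hp [b [H' [Hb Hm]]]; exists b, H'; split; first by rewrite -(bground_rel b He Hp).
apply: meq_transfer HH _ Hm; apply: inst_rel (extend_rel b He Hp) _; exact: pat2_rel.
Qed.
Lemma matches_from_rel H1 H2 (e1 e2 : env NS Fs) P1 P2 : lrel D H1 H2 -> envrel D e1 e2 -> patrel D P1 P2 ->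
  matches_from D H1 e1 P1 -> matches_from D H2 e2 P2.
Proof.
move=> HH He Hp [b [H' [Hb Hm]]]; exists b, H'; split; first by rewrite -(bground_rel b He Hp).
apply: meq_transfer HH _ Hm; apply: inst_rel (extend_rel b He Hp) _; exact: pat3_rel.
Qed.

Definition FR (e : env NS Fs) (p : NS * term) (q : NS * nat) :=
  p.1 = q.1 /\ deq D (subst (lookup e) p.2) (TNom q.1 q.2).

Lemma fmatchE e Ps fs : fmatch D e Ps fs <-> List.Forall2 (FR e) Ps fs.
Proof.
split.
- case=> H1 H2; elim: H2 H1 => [|p q l1 l2 Hpq _ IH] //= /eqP; rewrite eqseq_cons => /andP [/eqP E1 /eqP E2].
  constructor; [split => // | exact: IH].
- elim=> [|p q l1 l2 [E1 E2] _ [IH1 IH2]]; split => //=; [by rewrite E1 IH1 | by constructor].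
Qed.

Lemma fmatch_rel (e1 e2 : env NS Fs) P1 P2 b fs : envrel D e1 e2 -> patrel D P1 P2 ->
  fmatch D (extend e1 P1 b) (p_star P1) fs ->
  exists2 fs2, Permutation fs fs2 & fmatch D (extend e2 P2 b) (p_star P2) fs2.
Proof.
move=> He Hp /fmatchE Hf; have He' := extend_rel b He Hp.
case: Hp => _ _ _ [l Hl Hkl].
have H1 : List.Forall2 (FR (extend e2 P2 b)) l fs.
  apply: (@F2_trans _ _ _ (@krel _ _ D NS)) (F2_sym (@krel_sym _ _ D _) Hkl) Hf.
  move=> x y z [E1 E2] [E3 E4]; split; first congruence.
  apply: deq_trans E4; apply: aeq_deq; exact: subst_rel (envrel_sym He') E2.
have [fs2 [Hp2 Hf2]] := Permutation_Forall2 (Permutation_sym Hl) H1.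
by exists fs2 => //; apply/fmatchE.
Qed.

Lemma deq_aeq_l B B2 c : aeq B B2 -> deq D B c -> deq D B2 c.
Proof. move=> H1 H2; apply: deq_trans H2; apply: aeq_deq; exact: aeq_sym. Qed.

End StepRel.

Section CstepRel.
Variables (NS : eqType) (Fs : Type) (D : data_algebra NS Fs).
Local Notation term := (term NS Fs).
Local Notation aeq := (aeq D).

Lemma cstep_rel F F2 cs cs2 cs' : lrel D F F2 -> List.Forall2 (cirel D) cs cs2 -> cstep D F cs cs' ->
  exists2 cs2', cstep D F2 cs2 cs2' & List.Forall2 (cirel D) cs' cs2'.
Proof.
move=> HF Hcs Hst; case: Hst Hcs =>
  [Sk e|Sk e B|Sk e psi|Sk B|Sk e psi1 psi2|Sk e psi B HB|Sk e psi B HB|Sk e P psi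
  |Sk H e P psi b H'' Hb Hm|Sk H e P psi B HB|Sk H e P psi B HB|Sk H e P psi Hn] Hcs.
- move: (F2_rcons_inv Hcs) => [s' [y [-> Hs Hy]]].
  case: y Hy => [e2 p2|B2||e2 p2|H2 e2 P2 p2] //= [He Hp]; case: p2 Hp => //= _.
  exists (rcons s' (CIRes (tF D))); first exact: CS_False.
  apply: F2_rcons => //; exact: aeq_refl.
- move: (F2_rcons_inv Hcs) => [s' [y [-> Hs Hy]]].
  case: y Hy => [e2 p2|B2||e2 p2|H2 e2 P2 p2] //= [He Hp]; case: p2 Hp => //= B2 HB.
  exists (rcons s' (CIRes (subst (lookup e2) B2))); first exact: CS_Bool.
  apply: F2_rcons => //=; exact: subst_rel.
- move: (F2_rcons_inv Hcs) => [s' [y [-> Hs Hy]]].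
  case: y Hy => [e2 p2|B2||e2 p2|H2 e2 P2 p2] //= [He Hp]; case: p2 Hp => //= p2 Hp.
  exists (s' ++ [:: CINot; CIFrame e2 p2]); first exact: CS_Neg.
  exact: F2_cat2.
- move: (F2_cat2_inv Hcs) => [s' [y1 [y2 [-> Hs Hy1 Hy2]]]].
  case: y1 Hy1 => [e2 p2|B2||e2 p2|H2 e2 P2 p2] //= _.
  case: y2 Hy2 => [e2 p2|B2||e2 p2|H2 e2 P2 p2] //= HB.
  exists (rcons s' (CIRes (TOp (b_not D) [:: B2]))); first exact: CS_Not.
  apply: F2_rcons => //=; apply: aeq_op; by constructor.
- move: (F2_rcons_inv Hcs) => [s' [y [-> Hs Hy]]].
  case: y Hy => [e2 p2|B2||e2 p2|H2 e2 P2 p2] //= [He Hp]; case: p2 Hp => //= a2 b2 [Ha Hb].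
  exists (s' ++ [:: CIOrK e2 a2; CIFrame e2 b2]); first exact: CS_Or.
  exact: F2_cat2.
- move: (F2_cat2_inv Hcs) => [s' [y1 [y2 [-> Hs Hy1 Hy2]]]].
  case: y1 Hy1 => [e2 p2|B2||e2 p2|H2 e2 P2 p2] //= [He Hp].
  case: y2 Hy2 => [e3 p3|B2||e3 p3|H3 e3 P3 p3] //= HB2.
  exists (rcons s' (CIRes (tT D))); first by apply: CS_OrTrue; exact: deq_aeq_l HB2 HB.
  apply: F2_rcons => //=; exact: aeq_refl.
- move: (F2_cat2_inv Hcs) => [s' [y1 [y2 [-> Hs Hy1 Hy2]]]].
  case: y1 Hy1 => [e2 p2|B2||e2 p2|H2 e2 P2 p2] //= [He Hp].
  case: y2 Hy2 => [e3 p3|B2||e3 p3|H3 e3 P3 p3] //= HB2.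
  exists (rcons s' (CIFrame e2 p2)); first by apply: CS_OrFalse; exact: deq_aeq_l HB2 HB.
  exact: F2_rcons.
- move: (F2_rcons_inv Hcs) => [s' [y [-> Hs Hy]]].
  case: y Hy => [e2 p2|B2||e2 p2|H2 e2 P2 p2] //= [He Hp]; case: p2 Hp => //= P2 p2 [HP Hp].
  exists (rcons s' (CIEx F2 e2 P2 p2)); first exact: CS_ExInit.
  exact: F2_rcons.
- move: (F2_rcons_inv Hcs) => [s' [y [-> Hs Hy]]].
  case: y Hy => [e2 p2|B2||e2 p2|H2 e2 P2 p2] //= [HH He HP Hp].
  exists (s' ++ [:: CIEx (H'' ++ inst (extend e2 P2 b) (p_bang P2)) e2 P2 p2;
                   CIFrame (extend e2 P2 b) p2]).
    apply: CS_ExMatch; first by rewrite -(bground_rel b He HP).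
    apply: meq_transfer HH _ Hm; apply: inst_rel (extend_rel b He HP) _; exact: pat2_rel.
  apply: F2_cat2 => //=; split => //; last exact: extend_rel.
  apply: mrel_app; first exact: lrel_refl.
  apply: inst_rel; first exact: extend_rel.
  by case: HP.
- move: (F2_cat2_inv Hcs) => [s' [y1 [y2 [-> Hs Hy1 Hy2]]]].
  case: y1 Hy1 => [e2 p2|B2||e2 p2|H2 e2 P2 p2] //= Hy1.
  case: y2 Hy2 => [e3 p3|B2||e3 p3|H3 e3 P3 p3] //= HB2.
  exists (rcons s' (CIEx H2 e2 P2 p2)); first by apply: CS_ExFalse; exact: deq_aeq_l HB2 HB.
  exact: F2_rcons.
- move: (F2_cat2_inv Hcs) => [s' [y1 [y2 [-> Hs Hy1 Hy2]]]].
  case: y1 Hy1 => [e2 p2|B2||e2 p2|H2 e2 P2 p2] //= Hy1.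
  case: y2 Hy2 => [e3 p3|B2||e3 p3|H3 e3 P3 p3] //= HB2.
  exists (rcons s' (CIRes (tT D))); first by apply: CS_ExTrue; exact: deq_aeq_l HB2 HB.
  apply: F2_rcons => //=; exact: aeq_refl.
- move: (F2_rcons_inv Hcs) => [s' [y [-> Hs Hy]]].
  case: y Hy => [e2 p2|B2||e2 p2|H2 e2 P2 p2] //= [HH He HP Hp].
  exists (rcons s' (CIRes (tF D))).
    apply: CS_ExNoMatch => Hm; apply: Hn.
    exact: matches_ex_rel (lrel_sym HH) (envrel_sym He) (patrel_sym HP) Hm.
  apply: F2_rcons => //=; exact: aeq_refl.
Qed.
End CstepRel.

Lemma F2_single_inv A B (r : A -> B -> Prop) x l :
  List.Forall2 r [:: x] l -> exists y, l = [:: y] /\ r x y.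
Proof. move=> H; inversion H; subst; inversion H4; subst; by exists y. Qed.
Lemma F2_nil_inv A B (r : A -> B -> Prop) l : List.Forall2 r [::] l -> l = [::].
Proof. by move=> H; inversion H. Qed.

Section DstepRel.
Variables (NS : eqType) (Fs : Type) (D : data_algebra NS Fs).
Local Notation term := (term NS Fs).
Local Notation aeq := (aeq D).

Lemma lrel_rcons l1 l2 x y : lrel D l1 l2 -> aeq x y -> lrel D (rcons l1 x) (rcons l2 y).
Proof.
move=> H Hxy; rewrite -!cats1; apply: mrel_app => //.
exists [:: y] => //; by constructor.
Qed.

Lemma dstep_rel t u t' : steq D t u -> dstep D t t' -> exists2 u', dstep D u u' & steq D t' u'.
Proof.
move=> Htu Hst; case: Hst u Htu => [F F' fF Sk|F F' fF Sk e|F F' fF Sk e|F F' fF Sk e f|F F' fF Sk e Ra Rb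
  |F F' fF Sk e Rb|F F' fF Sk e Rb|F F' fF Sk e phi R|F F' fF Sk e B R HB|F F' fF Sk e B R HB
  |F F' fF Sk e cs cs' R Hc|F F' fF Sk e P R|F F' fF Sk H e B P R b G H' K fs Hb HFm HHm Hperm Hm
  |F F' fF Sk H e B F0 P R|F F' fF Sk H e B F0 P R|F F' fF Sk H e B P R Hn|F F' fF|F F' fF]
  [F2 F2' fF2 S2|G2 g2|G2 g2] //= [HF HF' Hp HS].
- move: (F2_cat2_inv HS) => [s' [y1 [y2 [-> Hs Hy1 Hy2]]]].
  case: y1 Hy1 => [e2 R2||e2 R2|e2 cs2 R2|H2 e2 B2 F02 P2 R2] //= _.
  case: y2 Hy2 => [e3 R3||e3 R3|e3 cs3 R3|H3 e3 B3 F03 P3 R3] //= _.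
  exists (St F2 F2' fF2 (rcons s' DIOk)); first exact: DS_OkOk.
  by split => //; apply: F2_rcons.
- move: (F2_rcons_inv HS) => [s' [y [-> Hs Hy]]].
  case: y Hy => [e2 R2||e2 R2|e2 cs2 R2|H2 e2 B2 F02 P2 R2] //= [He HR]; case: R2 HR => //= _.
  exists (St F2 F2' fF2 (rcons s' DIOk)); first exact: DS_Ok.
  by split => //; apply: F2_rcons.
- move: (F2_rcons_inv HS) => [s' [y [-> Hs Hy]]].
  case: y Hy => [e2 R2||e2 R2|e2 cs2 R2|H2 e2 B2 F02 P2 R2] //= [He HR]; case: R2 HR => //= _.
  by exists (St F2 F2' fF2 s'); first exact: DS_Empty.
- move: (F2_rcons_inv HS) => [s' [y [-> Hs Hy]]].
  case: y Hy => [e2 R2||e2 R2|e2 cs2 R2|H2 e2 B2 F02 P2 R2] //= [He HR]; case: R2 HR => //= f2 Hf.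
  exists (St F2 (rcons F2' (subst (lookup e2) f2)) fF2 (rcons s' DIOk)); first exact: DS_Fact.
  split => //; [apply: lrel_rcons => //; exact: subst_rel | exact: F2_rcons].
- move: (F2_rcons_inv HS) => [s' [y [-> Hs Hy]]].
  case: y Hy => [e2 R2||e2 R2|e2 cs2 R2|H2 e2 B2 F02 P2 R2] //= [He HR]; case: R2 HR => //= a2 b2 [Ha Hb].
  exists (St F2 F2' fF2 (s' ++ [:: DIPlusK e2 b2; DIFrame e2 a2])); first exact: DS_Plus.
  by split => //; apply: F2_cat2.
- move: (F2_cat2_inv HS) => [s' [y1 [y2 [-> Hs Hy1 Hy2]]]].
  case: y1 Hy1 => [e2 R2'||e2 R2'|e2 cs2 R2'|H2 e2 B2 F02 P2 R2'] //= [He HR].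
  case: y2 Hy2 => [e3 R3||e3 R3|e3 cs3 R3|H3 e3 B3 F03 P3 R3] //= _.
  exists (St F2 F2' fF2 (s' ++ [:: DIOk; DIFrame e2 R2'])); first exact: DS_PlusOk.
  by split => //; apply: F2_cat2.
- move: (F2_rcons_inv HS) => [s' [y [-> Hs Hy]]].
  case: y Hy => [e2 R2'||e2 R2'|e2 cs2 R2'|H2 e2 B2 F02 P2 R2'] //= [He HR].
  exists (St F2 F2' fF2 (rcons s' (DIFrame e2 R2'))); first exact: DS_PlusTop.
  by split => //; apply: F2_rcons.
- move: (F2_rcons_inv HS) => [s' [y [-> Hs Hy]]].
  case: y Hy => [e2 R2||e2 R2|e2 cs2 R2|H2 e2 B2 F02 P2 R2] //= [He HR]; case: R2 HR => //= phi2 R2 [Hphi HR].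
  exists (St F2 F2' fF2 (rcons s' (DICond e2 [:: CIFrame e2 phi2] R2))); first exact: DS_Imp.
  split => //; apply: F2_rcons => //=; split => //; by constructor.
- move: (F2_rcons_inv HS) => [s' [y [-> Hs Hy]]].
  case: y Hy => [e2 R2||e2 R2|e2 cs2 R2|H2 e2 B2 F02 P2 R2] //= [He Hcs HR].
  move: (F2_single_inv Hcs) => [c [-> Hc]].
  case: c Hc => [e3 p3|B2||e3 p3|H3 e3 P3 p3] //= HB2.
  exists (St F2 F2' fF2 s'); first by apply: DS_CondFalse; exact: deq_aeq_l HB2 HB.
  by split.
- move: (F2_rcons_inv HS) => [s' [y [-> Hs Hy]]].
  case: y Hy => [e2 R2||e2 R2|e2 cs2 R2|H2 e2 B2 F02 P2 R2] //= [He Hcs HR].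
  move: (F2_single_inv Hcs) => [c [-> Hc]].
  case: c Hc => [e3 p3|B2||e3 p3|H3 e3 P3 p3] //= HB2.
  exists (St F2 F2' fF2 (rcons s' (DIFrame e2 R2))); first by apply: DS_CondTrue; exact: deq_aeq_l HB2 HB.
  by split => //; apply: F2_rcons.
- move: (F2_rcons_inv HS) => [s' [y [-> Hs Hy]]].
  case: y Hy => [e2 R2||e2 R2|e2 cs2 R2|H2 e2 B2 F02 P2 R2] //= [He Hcs HR].
  have [cs2' Hst' Hcs'] := cstep_rel HF Hcs Hc.
  exists (St F2 F2' fF2 (rcons s' (DICond e2 cs2' R2))); first exact: DS_Cond.
  by split => //; apply: F2_rcons.
- move: (F2_rcons_inv HS) => [s' [y [-> Hs Hy]]].
  case: y Hy => [e2 R2||e2 R2|e2 cs2 R2|H2 e2 B2 F02 P2 R2] //= [He HR]; case: R2 HR => //= P2 R2 [HP HR].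
  exists (St F2 F2' fF2 (rcons s' (DIFrom F2 e2 false None P2 R2))); first exact: DS_FromInit.
  by split => //; apply: F2_rcons.
- move: (F2_rcons_inv HS) => [s' [y [-> Hs Hy]]].
  case: y Hy => [e2 R2||e2 R2|e2 cs2 R2|H2 e2 B2 F02 P2 R2] //= [HH He EB HF0 [HP HR]].
  subst B2; case: F02 HF0 => //= _.
  have Hb2 : bground e2 P2 b by rewrite -(bground_rel b He HP).
  have He2 := extend_rel b He HP.
  have HF2 := meq_transfer HF (inst_rel He2 (pat3_rel HP)) HFm.
  have HH2 := meq_transfer HH (inst_rel He2 (pat3_rel HP)) HHm.
  have [fs2 Hpf Hm2] := fmatch_rel He HP Hm.
  have Hp2 : Permutation fF2 (K ++ fs2).
    apply: Permutation_trans (Permutation_sym Hp) _; apply: Permutation_trans Hperm _.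
    exact: Permutation_app_head.
  exists (St (G ++ inst (extend e2 P2 b) (p_bang P2 ++ p_q P2)) F2' (K ++ upsilon fs2)
    (s' ++ [:: DIFrom (H' ++ inst (extend e2 P2 b) (p_bang P2)) e2 B
                 (Some (inst (extend e2 P2 b) (p_0 P2))) P2 R2; DIFrame (extend e2 P2 b) R2])).
    exact: DS_FromMatch.
  case: HP => HP1 HP2 HP3 HP4.
  split => //.
  + apply: mrel_app; [exact: lrel_refl | apply: inst_rel He2 _; exact: mrel_app].
  + apply: Permutation_app_head; rewrite /upsilon; exact: perm_map_seq.
  + apply: F2_cat2 => //=; split => //.
    * apply: mrel_app; [exact: lrel_refl | exact: inst_rel He2 _].
    * exact: inst_rel He2 _.
- move: (F2_rcons_inv HS) => [s' [y [-> Hs Hy]]].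
  case: y Hy => [e2 R2||e2 R2|e2 cs2 R2|H2 e2 B2 F02 P2 R2] //= [HH He EB HF0 [HP HR]].
  subst B2; case: F02 HF0 => //= l2 Hl2.
  exists (St (F2 ++ l2) F2' fF2 (rcons s' (DIFrom (H2 ++ l2) e2 B None P2 R2))); first exact: DS_FromRestore.
  split => //; [exact: mrel_app | apply: F2_rcons => //=; split => //; exact: mrel_app].
- move: (F2_cat2_inv HS) => [s' [y1 [y2 [-> Hs Hy1 Hy2]]]].
  case: y1 Hy1 => [e2 R2||e2 R2|e2 cs2 R2|H2 e2 B2 F02 P2 R2] //= [HH He EB HF0 [HP HR]].
  case: y2 Hy2 => [e3 R3||e3 R3|e3 cs3 R3|H3 e3 B3 F03 P3 R3] //= _.
  subst B2; case: F02 HF0 => //= l2 Hl2.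
  exists (St F2 F2' fF2 (rcons s' (DIFrom H2 e2 true None P2 R2))); first exact: DS_FromOk.
  by split => //; apply: F2_rcons.
- move: (F2_rcons_inv HS) => [s' [y [-> Hs Hy]]].
  case: y Hy => [e2 R2||e2 R2|e2 cs2 R2|H2 e2 B2 F02 P2 R2] //= [HH He EB HF0 [HP HR]].
  subst B2; case: F02 HF0 => //= _.
  exists (St F2 F2' fF2 (if B then rcons s' DIOk else s')).
    apply: DS_FromNoMatch => Hm; apply: Hn.
    exact: matches_from_rel (lrel_sym HH) (envrel_sym He) (patrel_sym HP) Hm.
  by split => //; case: (B) => //; apply: F2_rcons.
- move: (F2_single_inv HS) => [y [-> Hy]].
  case: y Hy => [e2 R2||e2 R2|e2 cs2 R2|H2 e2 B2 F02 P2 R2] //= _.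
  exists (SNew (F2 ++ F2') fF2); first exact: DS_New.
  by split => //; apply: mrel_app.
- rewrite (F2_nil_inv HS).
  exists (SFail (F2 ++ F2') fF2); first exact: DS_Fail.
  by split => //; apply: mrel_app.
Qed.
End DstepRel.

Lemma mem_rem_neq (T : eqType) (x y : T) s : y \in s -> y != x -> y \in rem x s.
Proof.
elim: s => //= z s IH; rewrite in_cons => /orP [/eqP <-|Hy] Hyx; case: ifP => [/eqP E|_].
- by rewrite E eqxx in Hyx.
- exact: mem_head.
- exact: Hy.
- by rewrite in_cons IH ?orbT.
Qed.

Section Final.
Variables (NS : eqType) (Fs : Type) (D : data_algebra NS Fs).

Lemma fresh_bound (t : state NS Fs) s m k : fresh_state t -> (s, m) \in ffacts t -> (s, k) \in snoms t -> k <= m.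
Proof.
move=> Ht Hm; rewrite /snoms mem_cat => /orP [Hk|Hk].
- apply: ltnW; apply: (Ht _ Hm (s, k)) => //; by rewrite mem_cat Hk.
- case E: ((s, k) == (s, m)); first by move/eqP: E => [->].
  apply: ltnW; apply: (Ht _ Hm (s, k)) => //; rewrite mem_cat; apply/orP; right.
  by apply: mem_rem_neq => //; rewrite E.
Qed.

Lemma steq_ffacts (t u : state NS Fs) : steq D t u -> Permutation (ffacts t) (ffacts u).
Proof. by case: t u => [? ? ? ?|? ?|? ?] [? ? ? ?|? ?|? ?] //= => [[]|[]|[]]. Qed.

Lemma ffacts_ren a (t : state NS Fs) : ffacts (sren a t) = fren a (ffacts t).
Proof. by case: t. Qed.

Lemma ffacts_snoms (t : state NS Fs) p : p \in ffacts t -> p \in snoms t.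
Proof. by rewrite /snoms mem_cat => ->; rewrite orbT. Qed.

Lemma fresh_ext (t1 t2 : state NS Fs) a : fresh_state t1 -> fresh_state t2 -> injon (snoms t1) a ->
  steq D (sren a t1) t2 ->
  exists g, [/\ forall s, injective (g s), agree g a (snoms t1) &
                forall s m, (s, m) \in ffacts t1 -> g s m.+1 = (g s m).+1].
Proof.
move=> F1 F2 Ha Hs.
have Hn1 : forall s m, (s, m) \in ffacts t1 -> (s, m.+1) \notin snoms t1.
  move=> s m Hm; apply/negP => /(fresh_bound F1 Hm); by rewrite ltnn.
have Hb2 : forall s m n, (s, m) \in ffacts t1 -> (s, n) \in snoms t1 -> a s n <= a s m.
  move=> s m n Hm Hn; apply: (fresh_bound F2 (s := s)).
  - rewrite -(perm_mem_eq (steq_ffacts Hs)) ffacts_ren; exact: (map_f (napp a) Hm).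
  - rewrite -(steq_noms Hs) snoms_ren; exact: (map_f (napp a) Hn).
pose f := fun s n => if (s, n) \in snoms t1 then a s n else (a s n.-1).+1.
pose X := snoms t1 ++ map (fun p => (p.1, p.2.+1)) (ffacts t1).
have HX : forall s n, (s, n) \in X -> (s, n) \in snoms t1 \/ exists2 m, (s, m) \in ffacts t1 & n = m.+1.
  move=> s n; rewrite mem_cat => /orP [H|/mapP [[s' m] Hm E]]; [by left|right].
  by case: E => -> ->; exists m.
have Hi : injon X f.
  move=> s n m /HX [Hn|[n0 Hn0 ->]] /HX [Hm|[m0 Hm0 ->]]; rewrite /f.
  - rewrite Hn Hm; exact: Ha.
  - rewrite Hn (negbTE (Hn1 _ _ Hm0)) /= => E.
    by have := Hb2 _ _ _ Hm0 Hn; rewrite E ltnn.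
  - rewrite Hm (negbTE (Hn1 _ _ Hn0)) /= => E.
    by have := Hb2 _ _ _ Hn0 Hm; rewrite -E ltnn.
  - rewrite (negbTE (Hn1 _ _ Hn0)) (negbTE (Hn1 _ _ Hm0)) /= => [[E]].
    by rewrite (Ha _ _ _ (ffacts_snoms Hn0) (ffacts_snoms Hm0) E).
have [g [Hg Hgf]] := ext_inj Hi.
exists g; split => //.
- move=> [s n] Hn; by rewrite (Hgf (s, n)) /f /= ?Hn // /X mem_cat Hn.
- move=> s m Hm.
  have HmX : (s, m) \in X by rewrite /X mem_cat (ffacts_snoms Hm).
  have HmX' : (s, m.+1) \in X.
    rewrite /X mem_cat; apply/orP; right; exact: (map_f (fun p => (p.1, p.2.+1)) Hm).
  rewrite (Hgf (s, m.+1) HmX') (Hgf (s, m) HmX) /f /= (negbTE (Hn1 _ _ Hm)).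
  by rewrite (ffacts_snoms Hm).
Qed.

Lemma bisim1 (t1 t2 : state NS Fs) : fresh_state t1 -> fresh_state t2 -> nom_equiv D t1 t2 ->
  forall t1', dstep D t1 t1' -> exists2 t2', dstep D t2 t2' & nom_equiv D t1' t2'.
Proof.
move=> F1 F2 /nom_equiv_inv [a Ha Hs] t1' Hst.
have [g [Hg Hga Hgs]] := fresh_ext F1 F2 Ha Hs.
have Hs' : steq D (sren g t1) t2 by rewrite (sren_ext Hga).
have Hst' := dstep_ren Hg Hgs Hst.
have [t2' H2 H3] := dstep_rel Hs' Hst'.
exists t2' => //; apply: (@nom_equiv_of _ _ _ _ _ g) => // s n m _ _; exact: Hg.
Qed.
End Final.

Theorem lemma19 (NS : eqType) (Fs : Type) (D : data_algebra NS Fs) :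
  [/\ (forall t : state NS Fs, nom_equiv D t t),
      (forall t1 t2 : state NS Fs, nom_equiv D t1 t2 -> nom_equiv D t2 t1),
      (forall t1 t2 t3 : state NS Fs,
          nom_equiv D t1 t2 -> nom_equiv D t2 t3 -> nom_equiv D t1 t3) &
      (forall t1 t2 : state NS Fs,
          fresh_state t1 -> fresh_state t2 -> nom_equiv D t1 t2 ->
          (forall t1', dstep D t1 t1' ->
             exists2 t2', dstep D t2 t2' & nom_equiv D t1' t2') /\
          (forall t2', dstep D t2 t2' ->
             exists2 t1', dstep D t1 t1' & nom_equiv D t1' t2'))].
Proof.
split.
- exact: nom_refl.
- exact: nom_sym.
- exact: nom_trans.
- move=> t1 t2 F1 F2 E; split; first exact: bisim1.
  move=> t2' H; have [t1' H1 H2] := bisim1 F2 F1 (nom_sym E) H.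
  exists t1' => //; exact: nom_sym.
Qed.
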